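(* Let $\mathcal K$ be a 2-category and let $(v,\{\xi_i:s'_iv\to vs_i\}_{0\le i\le2})$ be a 1-cell in $\mathsf{Wdl}^{(2)}(\overline{\mathcal K})$ from $\{\lambda_{i,j}:s_js_i\to s_is_j\}$ to $\{\lambda'_{i,j}:s'_js'_i\to s'_is'_j\}$. Put $\xi_{01}:=v\bar\lambda_{01}.\xi_0s_1.s'_0\xi_1:s'_0s'_1v\to vs_0s_1$ and $\xi_{12}:=v\bar\lambda_{12}.\xi_1s_2.s'_1\xi_2:s'_1s'_2v\to vs_1s_2$. Then $(v,\xi_{01},\xi_2)$ is a 1-cell $\lambda_{01,2}\to\lambda'_{01,2}$ in $\mathsf{Wdl}(\overline{\mathcal K})$ and $(v,\xi_0,\xi_{12})$ is a 1-cell $\lambda_{0,12}\to\lambda'_{0,12}$ in $\mathsf{Wdl}(\overline{\mathcal K})$, where $\lambda_{01,2}:=s_0\lambda_{1,2}.\lambda_{0,2}s_1.s_2\bar\lambda_{01}$ (a weak distributive law between the monads $(s_0s_1,\bar\lambda_{01})$ and $s_2$) and $\lambda_{0,12}:=\lambda_{0,1}s_2.s_1\lambda_{0,2}.\bar\lambda_{12}s_0$ (between $s_0$ and $(s_1s_2,\bar\lambda_{12})$), and similarly with primes.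
   Context: Conventions. For 1-cells, $uw$ is the horizontal composite ($w$ first); for 2-cells $\alpha,\beta$, $\alpha\beta$ is their horizontal composite; a 1-cell next to a 2-cell means whiskering; $\alpha.\beta$ is vertical composition ($\beta$ first). A monad $(A,t)$ has multiplication $\mu:tt\to t$, unit $\eta:1_A\to t$; decorations carry over. Local idempotent closure $\overline{\mathcal K}$: same 0-cells as $\mathcal K$; 1-cells are pairs $(v,\bar v)$ with $v$ a 1-cell of $\mathcal K$ and $\bar v:v\to v$ an idempotent 2-cell; 2-cells $(v,\bar v)\to(v',\bar v')$ are 2-cells $\omega:v\to v'$ of $\mathcal K$ with $\bar v'.\omega=\omega=\omega.\bar v$; compositions induced from $\mathcal K$, identity 2-cell of $(v,\bar v)$ is $\bar v$. Monads $(A,(t,\bar t))$ in $\overline{\mathcal K}$ satisfy $\mu.t\eta=\mu.\eta t=\bar t$; we write just $t$, and $v$ for $(v,\bar v)$. $\mathsf{Mnd}(\overline{\mathcal K})$: 1-cells $(A,t)\to(A',t')$ are $(v,\psi)$, $\psi:t'v\to vt$ a 2-cell of $\overline{\mathcal K}$, with $\psi.\mu'v=v\mu.\psi t.t'\psi$, $\psi.\eta'v=v\eta$. Weak distributive law in $\overline{\mathcal K}$: monads $(A,t),(A,s)$ and $\lambda:ts\to st$ in $\overline{\mathcal K}$ with $\lambda.\mu s=s\mu.\lambda t.t\lambda$, $\lambda.t\mu=\mu t.s\lambda.\lambda s$, $\lambda.\eta s=\mu t.s\lambda.st\eta.s\eta$, $\lambda.t\eta=s\mu.\lambda t.\eta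 st.\eta t$; idempotent $\bar\lambda:=\mu t.s\lambda.st\eta$; induced monad $(st,\bar\lambda)$ with multiplication $\mu\mu.s\lambda t$, unit $\lambda.\eta\eta$. $\mathsf{Wdl}(\overline{\mathcal K})$: a 1-cell from $\lambda:ts\to st$ to $\lambda':t's'\to s't'$ is $(v,\xi,\zeta)$ with $(v,\xi):(A,t)\to(A',t')$, $(v,\zeta):(A,s)\to(A',s')$ 1-cells of $\mathsf{Mnd}(\overline{\mathcal K})$ and $v\lambda.\xi s.t'\zeta=v\bar\lambda.\zeta t.s'\xi.\lambda'v$. $\mathsf{Wdl}^{(2)}(\overline{\mathcal K})$: a 0-cell consists of monads $(A,s_0),(A,s_1),(A,s_2)$ in $\overline{\mathcal K}$ and weak distributive laws $\lambda_{i,j}:s_js_i\to s_is_j$ ($0\le i<j\le2$) with $\lambda_{0,1}s_2.s_1\lambda_{0,2}.\lambda_{1,2}s_0=s_0\lambda_{1,2}.\lambda_{0,2}s_1.s_2\lambda_{0,1}$; a 1-cell is $v$ with $\xi_i:s'_iv\to vs_i$ such that each $(v,\xi_i,\xi_j)$, $i<j$, is a 1-cell $\lambda_{i,j}\to\lambda'_{i,j}$ of $\mathsf{Wdl}(\overline{\mathcal K})$. $\bar\lambda_{ij}$ is the idempotent of $\lambda_{i,j}$. *)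

(* Defs.v *)
(* A (strict) 2-category in single-sorted presentation: 0-cells, 1-cells and
   2-cells are three types, with domain/codomain maps and total composition
   operations whose laws are required whenever the arguments are composable. *)
Set Implicit Arguments.
Unset Strict Implicit.

Record TwoCat := {
  Ob : Type; C1 : Type; C2 : Type;
  dom1 : C1 -> Ob; cod1 : C1 -> Ob;
  id1 : Ob -> C1;
  comp1 : C1 -> C1 -> C1;        (* comp1 u w = uw  (w first) *)
  src2 : C2 -> C1; tgt2 : C2 -> C1;
  id2 : C1 -> C2;
  vcomp : C2 -> C2 -> C2;        (* vcomp a b = a.b (b first) *)
  hcomp : C2 -> C2 -> C2;
  dom_id1 : forall A, dom1 (id1 A) = A;
  cod_id1 : forall A, cod1 (id1 A) = A;
  dom_comp1 : forall u w, dom1 u = cod1 w -> dom1 (comp1 u w) = dom1 w;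
  cod_comp1 : forall u w, dom1 u = cod1 w -> cod1 (comp1 u w) = cod1 u;
  comp1A : forall u w x, dom1 u = cod1 w -> dom1 w = cod1 x ->
    comp1 u (comp1 w x) = comp1 (comp1 u w) x;
  comp1_id_l : forall u, comp1 (id1 (cod1 u)) u = u;
  comp1_id_r : forall u, comp1 u (id1 (dom1 u)) = u;
  dom_src_tgt : forall a, dom1 (src2 a) = dom1 (tgt2 a);
  cod_src_tgt : forall a, cod1 (src2 a) = cod1 (tgt2 a);
  src_id2 : forall u, src2 (id2 u) = u;
  tgt_id2 : forall u, tgt2 (id2 u) = u;
  src_vcomp : forall a b, src2 a = tgt2 b -> src2 (vcomp a b) = src2 b;
  tgt_vcomp : forall a b, src2 a = tgt2 b -> tgt2 (vcomp a b) = tgt2 a;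
  vcompA : forall a b c, src2 a = tgt2 b -> src2 b = tgt2 c ->
    vcomp a (vcomp b c) = vcomp (vcomp a b) c;
  vcomp_id_l : forall a, vcomp (id2 (tgt2 a)) a = a;
  vcomp_id_r : forall a, vcomp a (id2 (src2 a)) = a;
  src_hcomp : forall a b, dom1 (src2 a) = cod1 (src2 b) ->
    src2 (hcomp a b) = comp1 (src2 a) (src2 b);
  tgt_hcomp : forall a b, dom1 (src2 a) = cod1 (src2 b) ->
    tgt2 (hcomp a b) = comp1 (tgt2 a) (tgt2 b);
  hcompA : forall a b c, dom1 (src2 a) = cod1 (src2 b) ->
    dom1 (src2 b) = cod1 (src2 c) ->
    hcomp a (hcomp b c) = hcomp (hcomp a b) c;
  hcomp_id_l : forall a, hcomp (id2 (id1 (cod1 (src2 a)))) a = a;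
  hcomp_id_r : forall a, hcomp a (id2 (id1 (dom1 (src2 a)))) = a;
  hcomp_id2 : forall u w, dom1 u = cod1 w ->
    hcomp (id2 u) (id2 w) = id2 (comp1 u w);
  interchange : forall a b c d, src2 a = tgt2 b -> src2 c = tgt2 d ->
    dom1 (src2 a) = cod1 (src2 c) ->
    hcomp (vcomp a b) (vcomp c d) = vcomp (hcomp a c) (hcomp b d)
}.

Arguments dom1 {_} u. Arguments cod1 {_} u. Arguments id1 {_} A.
Arguments comp1 {_} u w. Arguments src2 {_} a. Arguments tgt2 {_} a.
Arguments id2 {_} u. Arguments vcomp {_} a b. Arguments hcomp {_} a b.

Infix "⋅" := vcomp (at level 40, left associativity).

Definition hom1 (K : TwoCat) (u : C1 K) (A B : Ob K) := dom1 u = A /\ cod1 u = B.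
Definition cell2 (K : TwoCat) (a : C2 K) (f g : C1 K) := src2 a = f /\ tgt2 a = g.

(* ---- the local idempotent closure  Kbar ----
   A 1-cell of Kbar is a pair (v, vbar). *)
Definition kb1 (K : TwoCat) := (C1 K * C2 K)%type.

Definition khom (K : TwoCat) (v : kb1 K) (A B : Ob K) :=
  hom1 (fst v) A B /\ cell2 (snd v) (fst v) (fst v) /\ (snd v) ⋅ (snd v) = (snd v).

Definition kcell (K : TwoCat) (w : C2 K) (v v' : kb1 K) :=
  cell2 w (fst v) (fst v') /\ (snd v') ⋅ w = w /\ w ⋅ (snd v) = w.

Definition kcomp1 (K : TwoCat) (u w : kb1 K) : kb1 K := (comp1 (fst u) (fst w), hcomp (snd u) (snd w)).
Definition kid1 (K : TwoCat) (A : Ob K) : kb1 K := (id1 A, id2 (id1 A)).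

(* whiskering in Kbar: with the identity 2-cell of (u,ubar), i.e. ubar *)
Definition wl (K : TwoCat) (u : kb1 K) (a : C2 K) := hcomp (snd u) a.
Definition wr (K : TwoCat) (a : C2 K) (u : kb1 K) := hcomp a (snd u).

Definition is_monad (K : TwoCat) (A : Ob K) (t : kb1 K) (mu eta : C2 K) :=
  khom t A A /\ kcell mu (kcomp1 t t) t /\ kcell eta (kid1 A) t /\
  mu ⋅ wl t mu = mu ⋅ wr mu t /\
  mu ⋅ wl t eta = (snd t) /\ mu ⋅ wr eta t = (snd t).

Definition is_mnd1 (K : TwoCat) (A A' : Ob K)
    (t : kb1 K) (mu eta : C2 K) (t' : kb1 K) (mu' eta' : C2 K)
    (v : kb1 K) (psi : C2 K) :=
  khom v A A' /\ kcell psi (kcomp1 t' v) (kcomp1 v t) /\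
  psi ⋅ wr mu' v = wl v mu ⋅ wr psi t ⋅ wl t' psi /\
  psi ⋅ wr eta' v = wl v eta.

(* ---- weak distributive laws lam : ts -> st in Kbar ----
   t has multiplication mut, unit etat; s has mus, etas *)
Definition is_wdl (K : TwoCat) (A : Ob K)
    (t : kb1 K) (mut etat : C2 K) (s : kb1 K) (mus etas : C2 K) (lam : C2 K) :=
  is_monad A t mut etat /\ is_monad A s mus etas /\
  kcell lam (kcomp1 t s) (kcomp1 s t) /\
  lam ⋅ wr mut s = wl s mut ⋅ wr lam t ⋅ wl t lam /\
  lam ⋅ wl t mus = wr mus t ⋅ wl s lam ⋅ wr lam s /\
  lam ⋅ wr etat s = wr mus t ⋅ wl s lam ⋅ wl (kcomp1 s t) etas ⋅ wl s etat /\
  lam ⋅ wl t etas = wl s mut ⋅ wr lam t ⋅ wr etat (kcomp1 s t) ⋅ wr etas t.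

Definition lambar (K : TwoCat) (t : kb1 K) (s : kb1 K) (mus etas : C2 K)
    (lam : C2 K) : C2 K :=
  wr mus t ⋅ wl s lam ⋅ wl (kcomp1 s t) etas.

(* the induced monad (st, lambar) with multiplication mu mu . s lam t
   and unit lam . eta eta *)
Definition cmp1 (K : TwoCat) (t s : kb1 K) (mus etas lam : C2 K) : kb1 K :=
  (comp1 (fst s) (fst t), lambar t s mus etas lam).
Definition cmp_mu (K : TwoCat) (t s : kb1 K) (mut mus lam : C2 K) : C2 K :=
  hcomp mus mut ⋅ wr (wl s lam) t.
Definition cmp_eta (K : TwoCat) (etat etas lam : C2 K) : C2 K :=
  lam ⋅ hcomp etat etas.

(* ---- 1-cells (v, xi, zeta) : lam -> lam' of Wdl(Kbar),
   xi for the monad t, zeta for the monad s (lam : ts -> st) ---- *)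
Definition is_wdl1 (K : TwoCat) (A A' : Ob K)
    (t : kb1 K) (mut etat : C2 K) (s : kb1 K) (mus etas lam : C2 K)
    (t' : kb1 K) (mut' etat' : C2 K) (s' : kb1 K) (mus' etas' lam' : C2 K)
    (v : kb1 K) (xi zeta : C2 K) :=
  is_mnd1 A A' t mut etat t' mut' etat' v xi /\
  is_mnd1 A A' s mus etas s' mus' etas' v zeta /\
  wl v lam ⋅ wr xi s ⋅ wl t' zeta =
    wl v (lambar t s mus etas lam) ⋅ wr zeta t ⋅ wl s' xi ⋅ wr lam' v.

(* ---- 0-cells of Wdl^(2)(Kbar): monads s0,s1,s2 on A and weak distributive
   laws lam_ij : s_j s_i -> s_i s_j satisfying the Yang-Baxter condition ---- *)
Definition is_wdl2 (K : TwoCat) (A : Ob K)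
    (s0 : kb1 K) (mu0 eta0 : C2 K) (s1 : kb1 K) (mu1 eta1 : C2 K)
    (s2 : kb1 K) (mu2 eta2 : C2 K) (l01 l02 l12 : C2 K) :=
  is_wdl A s1 mu1 eta1 s0 mu0 eta0 l01 /\
  is_wdl A s2 mu2 eta2 s0 mu0 eta0 l02 /\
  is_wdl A s2 mu2 eta2 s1 mu1 eta1 l12 /\
  wr l01 s2 ⋅ wl s1 l02 ⋅ wr l12 s0 = wl s0 l12 ⋅ wr l02 s1 ⋅ wl s2 l01.

Definition is_wdl2_hom (K : TwoCat) (A A' : Ob K)
    (s0 : kb1 K) (mu0 eta0 : C2 K) (s1 : kb1 K) (mu1 eta1 : C2 K)
    (s2 : kb1 K) (mu2 eta2 : C2 K) (l01 l02 l12 : C2 K)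
    (s0' : kb1 K) (mu0' eta0' : C2 K) (s1' : kb1 K) (mu1' eta1' : C2 K)
    (s2' : kb1 K) (mu2' eta2' : C2 K) (l01' l02' l12' : C2 K)
    (v : kb1 K) (xi0 xi1 xi2 : C2 K) :=
  is_wdl1 A A' s1 mu1 eta1 s0 mu0 eta0 l01 s1' mu1' eta1' s0' mu0' eta0' l01' v xi1 xi0 /\
  is_wdl1 A A' s2 mu2 eta2 s0 mu0 eta0 l02 s2' mu2' eta2' s0' mu0' eta0' l02' v xi2 xi0 /\
  is_wdl1 A A' s2 mu2 eta2 s1 mu1 eta1 l12 s2' mu2' eta2' s1' mu1' eta1' l12' v xi2 xi1.

(* Main.v *)
From Stdlib Require Import List Arith Lia Bool PeanoNat.
Require Import Defs.
Import ListNotations.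

Record Sig := MkSig {
  sn1 : nat; sn2 : nat;
  sud : list nat; suc : list nat;
  scs : list (list nat); sct : list (list nat);
  scd : list nat; scc : list nat }.

Definition layer := (list nat * nat * list nat)%type.

Fixpoint leqb (l1 l2 : list nat) : bool :=
  match l1, l2 with
  | [], [] => true
  | a :: l1', b :: l2' => Nat.eqb a b && leqb l1' l2'
  | _, _ => false
  end.

Lemma leqb_eq l1 l2 : leqb l1 l2 = true -> l1 = l2.
Proof.
  revert l2; induction l1 as [|a l1 IH]; intros [|b l2]; simpl; try discriminate; auto.
  intros H; apply andb_true_iff in H; destruct H as [H1 H2].
  apply Nat.eqb_eq in H1; subst; f_equal; auto.
Qed.

Definition layeqb (x y : layer) : bool :=
  match x, y with (p, j, q), (p', j', q') => leqb p p' && Nat.eqb j j' && leqb q q' end.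

Fixpoint layseqb (l1 l2 : list layer) : bool :=
  match l1, l2 with
  | [], [] => true
  | a :: l1', b :: l2' => layeqb a b && layseqb l1' l2'
  | _, _ => false
  end.

Lemma layseqb_eq l1 l2 : layseqb l1 l2 = true -> l1 = l2.
Proof.
  revert l2; induction l1 as [|a l1 IH]; intros [|b l2]; simpl; try discriminate; auto.
  intros H; apply andb_true_iff in H; destruct H as [H1 H2].
  destruct a as [[p j] q], b as [[p' j'] q']; simpl in H1.
  apply andb_true_iff in H1; destruct H1 as [H1 H3].
  apply andb_true_iff in H1; destruct H1 as [H1 H4].
  apply leqb_eq in H1; apply leqb_eq in H3; apply Nat.eqb_eq in H4; subst; f_equal; auto.
Qed.

Section Pure.
Variable Sg : Sig.
Definition ud i := nth i (sud Sg) 0.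
Definition uc i := nth i (suc Sg) 0.
Definition cs j := nth j (scs Sg) [].
Definition ct j := nth j (sct Sg) [].
Definition cd j := nth j (scd Sg) 0.
Definition cc j := nth j (scc Sg) 0.

Fixpoint wfw (d c : nat) (w : list nat) : bool :=
  match w with
  | [] => Nat.eqb d c
  | a :: w' => (a <? sn1 Sg) && Nat.eqb (uc a) c && wfw d (ud a) w'
  end.

Definition jo (d : nat) (w : list nat) : nat :=
  match w with [] => d | a :: _ => uc a end.

Definition lsrc (L : layer) : list nat := let '(p, j, q) := L in p ++ cs j ++ q.
Definition ltgt (L : layer) : list nat := let '(p, j, q) := L in p ++ ct j ++ q.
Definition lwf (d c : nat) (L : layer) : bool :=
  let '(p, j, q) := L in (j <? sn2 Sg) && wfw d (cd j) q && wfw (cc j) c p.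

Definition ctgt (w : list nat) (ls : list layer) : list nat :=
  match ls with [] => w | L :: _ => ltgt L end.

Fixpoint cwf (d c : nat) (w : list nat) (ls : list layer) : bool :=
  match ls with
  | [] => wfw d c w
  | L :: ls' => lwf d c L && leqb (lsrc L) (ctgt w ls') && cwf d c w ls'
  end.

Definition swap2 (X Y : layer) : option (layer * layer) :=
  let '(p1, j1, q1) := X in
  let '(p2, j2, q2) := Y in
  if length p1 + length (cs j1) <=? length p2 then
    let m := skipn (length p1 + length (cs j1)) p2 in
    if leqb p2 (p1 ++ cs j1 ++ m) && leqb q1 (m ++ ct j2 ++ q2)
       && wfw (cc j2) (cd j1) m
    then Some ((p1 ++ ct j1 ++ m, j2, q2), (p1, j1, m ++ cs j2 ++ q2))
    else None
  else if length p2 + length (ct j2) <=? length p1 then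
    let m := skipn (length p2 + length (ct j2)) p1 in
    if leqb p1 (p2 ++ ct j2 ++ m) && leqb q2 (m ++ cs j1 ++ q1)
       && wfw (cc j1) (cd j2) m
    then Some ((p2, j2, m ++ ct j1 ++ q1), (p2 ++ cs j2 ++ m, j1, q1))
    else None
  else None.

Fixpoint swapf (n : nat) (ls : list layer) : option (list layer) :=
  match n, ls with
  | 0, X :: Y :: l => match swap2 X Y with Some (Y', X') => Some (Y' :: X' :: l) | None => None end
  | S n', Z :: l => match swapf n' l with Some l' => Some (Z :: l') | None => None end
  | _, _ => None
  end.

Definition wL (P : list nat) (L : layer) : layer := let '(p, j, q) := L in (P ++ p, j, q).
Definition wR (Q : list nat) (L : layer) : layer := let '(p, j, q) := L in (p, j, q ++ Q).
Definition whisk (P Q : list nat) (ls : list layer) : list layer := map (wL P) (map (wR Q) ls).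

Record Rule := MkRule { rd : nat; rc : nat; rw : list nat; rl : list layer; rr : list layer }.
Definition rrev (r : Rule) : Rule := MkRule (rd r) (rc r) (rw r) (rr r) (rl r).

Definition apply_rule (ls : list layer) (n : nat) (P Q : list nat) (r : Rule) : list layer :=
  firstn n ls ++ whisk P Q (rr r) ++ skipn (n + length (rl r)) ls.

Definition check_rule (d c : nat) (w : list nat) (ls : list layer) (n : nat) (P Q : list nat) (r : Rule) : bool :=
  cwf d c w ls && cwf d c w (apply_rule ls n P Q r)
  && layseqb (firstn (length (rl r)) (skipn n ls)) (whisk P Q (rl r))
  && leqb (ctgt w (skipn (n + length (rl r)) ls)) (P ++ rw r ++ Q)
  && wfw d (rd r) Q && wfw (rc r) c P
  && (length (rl r) <=? length (skipn n ls)).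

Definition rule_ok_b (r : Rule) : bool :=
  cwf (rd r) (rc r) (rw r) (rl r) && cwf (rd r) (rc r) (rw r) (rr r)
  && leqb (ctgt (rw r) (rl r)) (ctgt (rw r) (rr r)).

Inductive tm := TA (j : nat) | TB (i : nat) | TV (a b : tm) | TH (a b : tm).

Fixpoint tyf (t : tm) : option (list nat * list nat * nat * nat) :=
  match t with
  | TA j => if j <? sn2 Sg then Some (cs j, ct j, cd j, cc j) else None
  | TB i => if i <? sn1 Sg then Some ([i], [i], ud i, uc i) else None
  | TV a b => match tyf a, tyf b with
              | Some (sa, ta, da, ca), Some (sb, tb, db, cb) =>
                  if leqb sa tb && Nat.eqb da db && Nat.eqb ca cb then Some (sb, ta, da, ca) else None
              | _, _ => None end
  | TH a b => match tyf a, tyf b with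
              | Some (sa, ta, da, ca), Some (sb, tb, db, cb) =>
                  if Nat.eqb da cb then Some (sa ++ sb, ta ++ tb, db, ca) else None
              | _, _ => None end
  end.

Fixpoint nf (t : tm) : list layer :=
  match t with
  | TA j => [([], j, [])]
  | TB _ => []
  | TV a b => nf a ++ nf b
  | TH a b => match tyf a, tyf b with
              | Some (sa, _, _, _), Some (_, tb, _, _) => map (wR tb) (nf a) ++ map (wL sa) (nf b)
              | _, _ => [] end
  end.

Definition tsrc t := match tyf t with Some (s, _, _, _) => s | None => [] end.
Definition tdom t := match tyf t with Some (_, _, d, _) => d | None => 0 end.
Definition tcod t := match tyf t with Some (_, _, _, c) => c | None => 0 end.
Definition tgood (t1 t2 : tm) : bool :=
  match tyf t1, tyf t2 with
  | Some (s, t, d, c), Some (s', t', d', c') => leqb s s' && leqb t t' && Nat.eqb d d' && Nat.eqb c c'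
  | _, _ => false end.

Definition mkrule (t1 t2 : tm) : Rule := MkRule (tdom t1) (tcod t1) (tsrc t1) (nf t1) (nf t2).

End Pure.

Section Sem.
Variable K : TwoCat.
Variable Sg : Sig.
Variable ob : nat -> Ob K.
Variable eu : nat -> C1 K.
Variable eub : nat -> C2 K.
Variable ec : nat -> C2 K.

Local Notation ud := (ud Sg).
Local Notation uc := (uc Sg).
Local Notation cs := (cs Sg).
Local Notation ct := (ct Sg).
Local Notation cd := (cd Sg).
Local Notation cc := (cc Sg).
Local Notation wfw := (wfw Sg).
Local Notation jo := (jo Sg).

Definition iw (d : nat) (w : list nat) : C1 K :=
  fold_right (fun a acc => comp1 (eu a) acc) (id1 (ob d)) w.
Definition ib (d : nat) (w : list nat) : C2 K :=
  fold_right (fun a acc => hcomp (eub a) acc) (id2 (id1 (ob d))) w.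
Definition il (d : nat) (L : layer) : C2 K :=
  let '(p, j, q) := L in hcomp (ib (cc j) p) (hcomp (ec j) (ib d q)).
Definition ich (d : nat) (w : list nat) (ls : list layer) : C2 K :=
  fold_right (fun L acc => il d L ⋅ acc) (ib d w) ls.
Fixpoint it (t : tm) : C2 K :=
  match t with
  | TA j => ec j
  | TB i => eub i
  | TV a b => it a ⋅ it b
  | TH a b => hcomp (it a) (it b)
  end.

Definition V1 := forall i, i < sn1 Sg ->
  dom1 (eu i) = ob (ud i) /\ cod1 (eu i) = ob (uc i) /\ src2 (eub i) = eu i /\
  tgt2 (eub i) = eu i /\ eub i ⋅ eub i = eub i.
Definition V2 := forall j, j < sn2 Sg ->
  wfw (cd j) (cc j) (cs j) = true /\ wfw (cd j) (cc j) (ct j) = true /\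
  src2 (ec j) = iw (cd j) (cs j) /\ tgt2 (ec j) = iw (cd j) (ct j) /\
  ib (cd j) (ct j) ⋅ ec j = ec j /\ ec j ⋅ ib (cd j) (cs j) = ec j.

Hypothesis HV1 : V1.
Hypothesis HV2 : V2.
Set Implicit Arguments.
Unset Strict Implicit.

Lemma eqb_true d c : Nat.eqb d c = true -> d = c.
Proof. apply Nat.eqb_eq. Qed.

Lemma wfw_cons d c a w : wfw d c (a :: w) = true ->
  a < sn1 Sg /\ uc a = c /\ wfw d (ud a) w = true.
Proof.
  simpl. intros H. apply andb_true_iff in H as [H H3].
  apply andb_true_iff in H as [H1 H2].
  apply Nat.ltb_lt in H1. apply Nat.eqb_eq in H2. auto.
Qed.

Lemma wfw_obj d c w : wfw d c w = true -> dom1 (iw d w) = ob d /\ cod1 (iw d w) = ob c.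
Proof.
  revert c; induction w as [|a w IH]; intros c H.
  - simpl in H. apply Nat.eqb_eq in H; subst. simpl. rewrite dom_id1, cod_id1. auto.
  - apply wfw_cons in H as (Ha & Hc & Hw). destruct (HV1 a Ha) as (D & C & _).
    destruct (IH _ Hw) as [IH1 IH2]. simpl.
    assert (E : dom1 (eu a) = cod1 (iw d w)) by (rewrite D, IH2; auto).
    rewrite dom_comp1 by exact E. rewrite cod_comp1 by exact E. rewrite C, Hc. auto.
Qed.

Lemma wfw_app x c w1 d w2 : wfw x c w1 = true -> wfw d x w2 = true -> wfw d c (w1 ++ w2) = true.
Proof.
  revert c; induction w1 as [|a w1 IH]; intros c H1 H2; simpl in *.
  - apply Nat.eqb_eq in H1; subst; auto.
  - apply andb_true_iff in H1 as [H H3]. rewrite H. simpl. eauto.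
Qed.

Lemma wfw_jo d c w : wfw d c w = true -> jo d w = c.
Proof.
  destruct w as [|a w]; simpl; intros H.
  - apply Nat.eqb_eq; auto.
  - apply andb_true_iff in H as [H _]. apply andb_true_iff in H as [_ H]. apply Nat.eqb_eq; auto.
Qed.

Lemma iw_app x c w1 d w2 : wfw x c w1 = true -> wfw d x w2 = true ->
  iw d (w1 ++ w2) = comp1 (iw x w1) (iw d w2).
Proof.
  revert c; induction w1 as [|a w1 IH]; intros c H1 H2.
  - simpl in H1. apply Nat.eqb_eq in H1; subst. simpl.
    destruct (wfw_obj H2) as [_ C]. rewrite <- C. rewrite comp1_id_l. auto.
  - apply wfw_cons in H1 as (Ha & Hc & Hw). simpl. rewrite (IH _ Hw H2).
    destruct (HV1 a Ha) as (D & _).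
    destruct (wfw_obj Hw) as [D1 C1]. destruct (wfw_obj H2) as [D2 C2].
    apply comp1A; congruence.
Qed.

Definition Ty (a : C2 K) (d c : nat) (s t : list nat) :=
  src2 a = iw d s /\ tgt2 a = iw d t /\ wfw d c s = true /\ wfw d c t = true.
Definition Abs (a : C2 K) (d : nat) (s t : list nat) :=
  ib d t ⋅ a = a /\ a ⋅ ib d s = a.

Lemma Ty_h a x c sa ta b d sb tb : Ty a x c sa ta -> Ty b d x sb tb ->
  Ty (hcomp a b) d c (sa ++ sb) (ta ++ tb).
Proof.
  intros (S1 & T1 & W1 & W2) (S2 & T2 & W3 & W4).
  assert (E : dom1 (src2 a) = cod1 (src2 b)).
  { rewrite S1, S2. rewrite (proj1 (wfw_obj W1)), (proj2 (wfw_obj W3)). auto. }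
  split; [|split; [|split]].
  - rewrite src_hcomp by exact E. rewrite S1, S2. symmetry; eapply iw_app; eauto.
  - rewrite tgt_hcomp by exact E. rewrite T1, T2. symmetry; eapply iw_app; eauto.
  - eapply wfw_app; eauto.
  - eapply wfw_app; eauto.
Qed.

Lemma Ty_v a d c s1 t b s : Ty a d c s1 t -> Ty b d c s s1 -> Ty (a ⋅ b) d c s t.
Proof.
  intros (S1 & T1 & W1 & W2) (S2 & T2 & W3 & W4).
  assert (E : src2 a = tgt2 b) by congruence.
  split; [|split; [|split]]; auto.
  - rewrite src_vcomp by exact E; auto.
  - rewrite tgt_vcomp by exact E; auto.
Qed.

Lemma hv a x c s1 t1 b s0 a' d s1' t1' b' s0' :
  Ty a x c s1 t1 -> Ty b x c s0 s1 -> Ty a' d x s1' t1' -> Ty b' d x s0' s1' ->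
  hcomp (a ⋅ b) (a' ⋅ b') = hcomp a a' ⋅ hcomp b b'.
Proof.
  intros (S1 & T1 & W1 & W2) (S2 & T2 & W3 & W4) (S3 & T3 & W5 & W6) (S4 & T4 & W7 & W8).
  apply interchange; try congruence.
  rewrite S1, S3. rewrite (proj1 (wfw_obj W1)), (proj2 (wfw_obj W5)). auto.
Qed.

Lemma hA a y c sa ta b x sb tb e d se te :
  Ty a y c sa ta -> Ty b x y sb tb -> Ty e d x se te ->
  hcomp a (hcomp b e) = hcomp (hcomp a b) e.
Proof.
  intros (S1 & T1 & W1 & W2) (S2 & T2 & W3 & W4) (S3 & T3 & W5 & W6).
  apply hcompA.
  - rewrite S1, S2. rewrite (proj1 (wfw_obj W1)), (proj2 (wfw_obj W3)). auto.
  - rewrite S2, S3. rewrite (proj1 (wfw_obj W3)), (proj2 (wfw_obj W5)). auto.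
Qed.

Lemma vA a d c s1 t b s2 e s3 : Ty a d c s1 t -> Ty b d c s2 s1 -> Ty e d c s3 s2 ->
  a ⋅ (b ⋅ e) = (a ⋅ b) ⋅ e.
Proof.
  intros (S1 & T1 & _) (S2 & T2 & _) (S3 & T3 & _). apply vcompA; congruence.
Qed.

Lemma iw_single a : a < sn1 Sg -> iw (ud a) [a] = eu a.
Proof.
  intros Ha. simpl. destruct (HV1 a Ha) as (D & _). rewrite <- D. apply comp1_id_r.
Qed.

Lemma Ty_eub a : a < sn1 Sg -> Ty (eub a) (ud a) (uc a) [a] [a].
Proof.
  intros Ha. destruct (HV1 a Ha) as (D & C & S1 & T1 & I). unfold Ty.
  rewrite iw_single by auto.
  split; [|split; [|split]]; auto; simpl; rewrite (proj2 (Nat.ltb_lt _ _) Ha);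
  rewrite Nat.eqb_refl, Nat.eqb_refl; auto.
Qed.

Lemma Ty_ib d c w : wfw d c w = true -> Ty (ib d w) d c w w.
Proof.
  revert c; induction w as [|a w IH]; intros c H.
  - simpl in H. apply Nat.eqb_eq in H; subst. split; [|split]; simpl; try rewrite src_id2;
    try rewrite tgt_id2; auto; rewrite Nat.eqb_refl; auto.
  - pose proof H as H'. apply wfw_cons in H as (Ha & Hc & Hw).
    pose proof (Ty_h (Ty_eub Ha) (IH _ Hw)) as T. rewrite Hc in T. exact T.
Qed.

Lemma ib_idem d c w : wfw d c w = true -> ib d w ⋅ ib d w = ib d w.
Proof.
  revert c; induction w as [|a w IH]; intros c H.
  - simpl. pose proof (vcomp_id_l (id2 (id1 (ob d)))) as E. rewrite tgt_id2 in E. exact E.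
  - apply wfw_cons in H as (Ha & Hc & Hw). simpl.
    rewrite <- (hv (Ty_eub Ha) (Ty_eub Ha) (Ty_ib Hw) (Ty_ib Hw)).
    rewrite (IH _ Hw). destruct (HV1 a Ha) as (_ & _ & _ & _ & I). rewrite I. auto.
Qed.

Lemma ib_app x c w1 d w2 : wfw x c w1 = true -> wfw d x w2 = true ->
  ib d (w1 ++ w2) = hcomp (ib x w1) (ib d w2).
Proof.
  revert c; induction w1 as [|a w1 IH]; intros c H1 H2.
  - simpl in H1. apply Nat.eqb_eq in H1; subst. simpl.
    destruct (Ty_ib H2) as (S1 & _ & W1 & _).
    pose proof (hcomp_id_l (ib d w2)) as E. rewrite S1 in E.
    rewrite (proj2 (wfw_obj W1)) in E. auto.
  - pose proof H1 as H1'. apply wfw_cons in H1 as (Ha & Hc & Hw). simpl.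
    rewrite (IH _ Hw H2). eapply hA. apply Ty_eub; auto. apply Ty_ib; eauto. apply Ty_ib; eauto.
Qed.

Lemma Abs_ib d c w : wfw d c w = true -> Abs (ib d w) d w w.
Proof. intros H; split; eapply ib_idem; eauto. Qed.

Lemma Ty_ec j : j < sn2 Sg -> Ty (ec j) (cd j) (cc j) (cs j) (ct j).
Proof. intros H. destruct (HV2 j H) as (A1 & A2 & A3 & A4 & _). split; auto. Qed.
Lemma Abs_ec j : j < sn2 Sg -> Abs (ec j) (cd j) (cs j) (ct j).
Proof. intros H. destruct (HV2 j H) as (_ & _ & _ & _ & A5 & A6). split; auto. Qed.

Lemma Ty_wfs a d c s t : Ty a d c s t -> wfw d c s = true.
Proof. intros (_ & _ & W & _); auto. Qed.
Lemma Ty_wft a d c s t : Ty a d c s t -> wfw d c t = true.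
Proof. intros (_ & _ & _ & W); auto. Qed.

Lemma Abs_h a x c sa ta b d sb tb : Ty a x c sa ta -> Abs a x sa ta -> Ty b d x sb tb -> Abs b d sb tb ->
  Abs (hcomp a b) d (sa ++ sb) (ta ++ tb).
Proof.
  intros Ta [A1 A2] Tb [B1 B2]. pose proof (Ty_wfs Ta). pose proof (Ty_wft Ta).
  pose proof (Ty_wfs Tb). pose proof (Ty_wft Tb). split.
  - rewrite (ib_app H0 H2). rewrite <- (hv (Ty_ib H0) Ta (Ty_ib H2) Tb). congruence.
  - rewrite (ib_app H H1). rewrite <- (hv Ta (Ty_ib H) Tb (Ty_ib H1)). congruence.
Qed.

Lemma Abs_v a d c s1 t b s : Ty a d c s1 t -> Abs a d s1 t -> Ty b d c s s1 -> Abs b d s s1 ->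
  Abs (a ⋅ b) d s t.
Proof.
  intros Ta [A1 A2] Tb [B1 B2]. split.
  - rewrite (vA (Ty_ib (Ty_wft Ta)) Ta Tb). congruence.
  - rewrite <- (vA Ta Tb (Ty_ib (Ty_wfs Tb))). congruence.
Qed.

Lemma lwf_parts d c p j q : lwf Sg d c (p, j, q) = true ->
  j < sn2 Sg /\ wfw d (cd j) q = true /\ wfw (cc j) c p = true.
Proof.
  simpl. intros H. apply andb_true_iff in H as [H H3]. apply andb_true_iff in H as [H1 H2].
  apply Nat.ltb_lt in H1. auto.
Qed.

Lemma Ty_il d c p j q : lwf Sg d c (p, j, q) = true ->
  Ty (il d (p, j, q)) d c (p ++ cs j ++ q) (p ++ ct j ++ q).
Proof.
  intros H. apply lwf_parts in H as (Hj & Hq & Hp). simpl.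
  exact (Ty_h (Ty_ib Hp) (Ty_h (Ty_ec Hj) (Ty_ib Hq))).
Qed.

Lemma Abs_il d c p j q : lwf Sg d c (p, j, q) = true ->
  Abs (il d (p, j, q)) d (p ++ cs j ++ q) (p ++ ct j ++ q).
Proof.
  intros H. apply lwf_parts in H as (Hj & Hq & Hp). simpl.
  apply (Abs_h (Ty_ib Hp) (Abs_ib Hp)).
  - exact (Ty_h (Ty_ec Hj) (Ty_ib Hq)).
  - exact (Abs_h (Ty_ec Hj) (Abs_ec Hj) (Ty_ib Hq) (Abs_ib Hq)).
Qed.

Lemma xchg1 a x c sa ta b d y sb tb m :
  Ty a x c sa ta -> Abs a x sa ta -> Ty b d y sb tb -> Abs b d sb tb -> wfw y x m = true ->
  hcomp a (hcomp (ib y m) (ib d tb)) ⋅ hcomp (ib x sa) (hcomp (ib y m) b) = hcomp a (hcomp (ib y m) b).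
Proof.
  intros Ta [A1 A2] Tb [B1 B2] Hm.
  pose proof (Ty_ib Hm) as TM. pose proof (Ty_ib (Ty_wft Tb)) as TT.
  rewrite <- (hv Ta (Ty_ib (Ty_wfs Ta)) (Ty_h TM TT) (Ty_h TM Tb)).
  rewrite <- (hv TM TM TT Tb). rewrite (ib_idem Hm). congruence.
Qed.

Lemma xchg2 a x c sa ta b d y sb tb m :
  Ty a x c sa ta -> Abs a x sa ta -> Ty b d y sb tb -> Abs b d sb tb -> wfw y x m = true ->
  hcomp (ib x ta) (hcomp (ib y m) b) ⋅ hcomp a (hcomp (ib y m) (ib d sb)) = hcomp a (hcomp (ib y m) b).
Proof.
  intros Ta [A1 A2] Tb [B1 B2] Hm.
  pose proof (Ty_ib Hm) as TM. pose proof (Ty_ib (Ty_wfs Tb)) as TS.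
  rewrite <- (hv (Ty_ib (Ty_wft Ta)) Ta (Ty_h TM Tb) (Ty_h TM TS)).
  rewrite <- (hv TM TM Tb TS). rewrite (ib_idem Hm). congruence.
Qed.

Lemma hPP P x c A d sA tA B sB : wfw x c P = true -> Ty A d x sA tA -> Ty B d x sB sA ->
  hcomp (ib x P) A ⋅ hcomp (ib x P) B = hcomp (ib x P) (A ⋅ B).
Proof.
  intros HP TA TB. rewrite <- (hv (Ty_ib HP) (Ty_ib HP) TA TB). rewrite (ib_idem HP). auto.
Qed.


Lemma il_eq d p j q : il d (p, j, q) = hcomp (ib (cc j) p) (hcomp (ec j) (ib d q)).
Proof. reflexivity. Qed.

Lemma il_swapL d c p1 j1 m j2 q2 :
  lwf Sg d c (p1, j1, m ++ ct j2 ++ q2) = true -> lwf Sg d c (p1 ++ cs j1 ++ m, j2, q2) = true ->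
  wfw (cc j2) (cd j1) m = true ->
  il d (p1, j1, m ++ ct j2 ++ q2) ⋅ il d (p1 ++ cs j1 ++ m, j2, q2) =
  il d (p1 ++ ct j1 ++ m, j2, q2) ⋅ il d (p1, j1, m ++ cs j2 ++ q2).
Proof.
  intros HX HY Hm. apply lwf_parts in HX as (Hj1 & HqX & Hp1).
  apply lwf_parts in HY as (Hj2 & Hq2 & _).
  destruct (HV2 j1 Hj1) as (WS1 & WT1 & _). destruct (HV2 j2 Hj2) as (WS2 & WT2 & _).
  pose proof (Ty_h (Ty_ec Hj2) (Ty_ib Hq2)) as Tb.
  pose proof (Abs_h (Ty_ec Hj2) (Abs_ec Hj2) (Ty_ib Hq2) (Abs_ib Hq2)) as Ab.
  pose proof (Ty_ec Hj1) as Ta. pose proof (Abs_ec Hj1) as Aa.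
  pose proof (Ty_ib Hm) as TM. pose proof (Ty_ib Hp1) as TP.
  rewrite !il_eq.
  rewrite (ib_app Hm (wfw_app WT2 Hq2)).
  rewrite (ib_app Hm (wfw_app WS2 Hq2)).
  rewrite (ib_app Hp1 (wfw_app WS1 Hm)), (ib_app WS1 Hm).
  rewrite (ib_app Hp1 (wfw_app WT1 Hm)), (ib_app WT1 Hm).
  rewrite <- (hA TP (Ty_h (Ty_ib WS1) TM) Tb).
  rewrite <- (hA (Ty_ib WS1) TM Tb).
  rewrite <- (hA TP (Ty_h (Ty_ib WT1) TM) Tb).
  rewrite <- (hA (Ty_ib WT1) TM Tb).
  rewrite (hPP Hp1 (Ty_h Ta (Ty_h TM (Ty_ib (wfw_app WT2 Hq2)))) (Ty_h (Ty_ib WS1) (Ty_h TM Tb))).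
  rewrite (hPP Hp1 (Ty_h (Ty_ib WT1) (Ty_h TM Tb)) (Ty_h Ta (Ty_h TM (Ty_ib (wfw_app WS2 Hq2))))).
  rewrite (xchg1 Ta Aa Tb Ab Hm). rewrite (xchg2 Ta Aa Tb Ab Hm). reflexivity.
Qed.

Lemma il_swapR d c p2 j2 m j1 q1 :
  lwf Sg d c (p2 ++ ct j2 ++ m, j1, q1) = true -> lwf Sg d c (p2, j2, m ++ cs j1 ++ q1) = true ->
  wfw (cc j1) (cd j2) m = true ->
  il d (p2 ++ ct j2 ++ m, j1, q1) ⋅ il d (p2, j2, m ++ cs j1 ++ q1) =
  il d (p2, j2, m ++ ct j1 ++ q1) ⋅ il d (p2 ++ cs j2 ++ m, j1, q1).
Proof.
  intros HX HY Hm. apply lwf_parts in HX as (Hj1 & Hq1 & _).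
  apply lwf_parts in HY as (Hj2 & HqY & Hp2).
  destruct (HV2 j1 Hj1) as (WS1 & WT1 & _). destruct (HV2 j2 Hj2) as (WS2 & WT2 & _).
  pose proof (Ty_h (Ty_ec Hj1) (Ty_ib Hq1)) as Tb.
  pose proof (Abs_h (Ty_ec Hj1) (Abs_ec Hj1) (Ty_ib Hq1) (Abs_ib Hq1)) as Ab.
  pose proof (Ty_ec Hj2) as Ta. pose proof (Abs_ec Hj2) as Aa.
  pose proof (Ty_ib Hm) as TM. pose proof (Ty_ib Hp2) as TP.
  rewrite !il_eq.
  rewrite (ib_app Hm (wfw_app WS1 Hq1)).
  rewrite (ib_app Hm (wfw_app WT1 Hq1)).
  rewrite (ib_app Hp2 (wfw_app WT2 Hm)), (ib_app WT2 Hm).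
  rewrite (ib_app Hp2 (wfw_app WS2 Hm)), (ib_app WS2 Hm).
  rewrite <- (hA TP (Ty_h (Ty_ib WT2) TM) Tb).
  rewrite <- (hA (Ty_ib WT2) TM Tb).
  rewrite <- (hA TP (Ty_h (Ty_ib WS2) TM) Tb).
  rewrite <- (hA (Ty_ib WS2) TM Tb).
  rewrite (hPP Hp2 (Ty_h (Ty_ib WT2) (Ty_h TM Tb)) (Ty_h Ta (Ty_h TM (Ty_ib (wfw_app WS1 Hq1))))).
  rewrite (hPP Hp2 (Ty_h Ta (Ty_h TM (Ty_ib (wfw_app WT1 Hq1)))) (Ty_h (Ty_ib WS2) (Ty_h TM Tb))).
  rewrite (xchg1 Ta Aa Tb Ab Hm). rewrite (xchg2 Ta Aa Tb Ab Hm). reflexivity.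
Qed.

Lemma swap2_sound d c X Y Y' X' : swap2 Sg X Y = Some (Y', X') ->
  lwf Sg d c X = true -> lwf Sg d c Y = true -> il d X ⋅ il d Y = il d Y' ⋅ il d X'.
Proof.
  destruct X as [[p1 j1] q1], Y as [[p2 j2] q2]. unfold swap2.
  destruct (Nat.leb_spec (length p1 + length (cs j1)) (length p2)) as [L1|L1].
  - set (m := skipn (length p1 + length (cs j1)) p2). clearbody m.
    destruct (leqb p2 (p1 ++ cs j1 ++ m)) eqn:E1; [|discriminate].
    destruct (leqb q1 (m ++ ct j2 ++ q2)) eqn:E2; [|discriminate].
    destruct (wfw (cc j2) (cd j1) m) eqn:E3; [|discriminate]. simpl.
    intros H; injection H; intros; subst.
    apply leqb_eq in E1, E2. subst p2 q1. eapply il_swapL; eauto.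
  - destruct (Nat.leb_spec (length p2 + length (ct j2)) (length p1)) as [L2|L2]; [|discriminate].
    set (m := skipn (length p2 + length (ct j2)) p1). clearbody m.
    destruct (leqb p1 (p2 ++ ct j2 ++ m)) eqn:E1; [|discriminate].
    destruct (leqb q2 (m ++ cs j1 ++ q1)) eqn:E2; [|discriminate].
    destruct (wfw (cc j1) (cd j2) m) eqn:E3; [|discriminate]. simpl.
    intros H; injection H; intros; subst.
    apply leqb_eq in E1, E2. subst p1 q2. eapply il_swapR; eauto.
Qed.

Lemma leqb_refl l : leqb l l = true.
Proof. induction l; simpl; auto. rewrite Nat.eqb_refl; auto. Qed.

Lemma Ty_layer d c L : lwf Sg d c L = true -> Ty (il d L) d c (lsrc Sg L) (ltgt Sg L) /\ Abs (il d L) d (lsrc Sg L) (ltgt Sg L).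
Proof. destruct L as [[p j] q]. intros H. split; [eapply Ty_il | eapply Abs_il]; eauto. Qed.

Lemma cwf_cons d c w L ls : cwf Sg d c w (L :: ls) = true ->
  lwf Sg d c L = true /\ lsrc Sg L = ctgt Sg w ls /\ cwf Sg d c w ls = true.
Proof.
  simpl. intros H. apply andb_true_iff in H as [H H3]. apply andb_true_iff in H as [H1 H2].
  apply leqb_eq in H2. auto.
Qed.

Lemma Ty_ich d c w ls : cwf Sg d c w ls = true ->
  Ty (ich d w ls) d c w (ctgt Sg w ls) /\ Abs (ich d w ls) d w (ctgt Sg w ls).
Proof.
  induction ls as [|L ls IH]; intros H.
  - simpl in *. split; [eapply Ty_ib | eapply Abs_ib]; eauto.
  - apply cwf_cons in H as (HL & E & Hl). destruct (IH Hl) as [T A].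
    destruct (Ty_layer HL) as [TL AL]. rewrite E in TL, AL. simpl.
    split; [eapply Ty_v | eapply Abs_v]; eauto.
Qed.

Lemma swapf_sound d c w n : forall ls ls', swapf Sg n ls = Some ls' ->
  cwf Sg d c w ls = true -> cwf Sg d c w ls' = true -> ich d w ls = ich d w ls'.
Proof.
  induction n as [|n IH]; intros ls ls' Hs H1 H2.
  - destruct ls as [|X [|Y l]]; simpl in Hs; try discriminate.
    destruct (swap2 Sg X Y) as [[Y' X']|] eqn:E; [|discriminate].
    injection Hs; intros; subst ls'.
    apply cwf_cons in H1 as (HX & E1 & H1). apply cwf_cons in H1 as (HY & E2 & H1).
    apply cwf_cons in H2 as (HY' & E3 & H2). apply cwf_cons in H2 as (HX' & E4 & H2).
    destruct (Ty_layer HX) as [TX _]. destruct (Ty_layer HY) as [TY _].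
    destruct (Ty_layer HY') as [TY' _]. destruct (Ty_layer HX') as [TX' _].
    destruct (Ty_ich H1) as [TL _].
    rewrite E1 in TX. simpl in TX. rewrite E2 in TY. rewrite E3 in TY'. simpl in TY'. rewrite E4 in TX'.
    simpl. rewrite (vA TX TY TL). rewrite (vA TY' TX' TL).
    rewrite (swap2_sound E HX HY). reflexivity.
  - destruct ls as [|Z l]; simpl in Hs; try discriminate.
    destruct (swapf Sg n l) as [l'|] eqn:E; [|discriminate].
    injection Hs; intros; subst ls'.
    apply cwf_cons in H1 as (_ & _ & H1). apply cwf_cons in H2 as (_ & _ & H2).
    simpl. rewrite (IH l l'); auto.
Qed.

Lemma ctgt_app w l1 l2 : ctgt Sg (ctgt Sg w l2) l1 = ctgt Sg w (l1 ++ l2).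
Proof. destruct l1; simpl; auto. Qed.

Lemma cwf_app d c w l1 l2 : cwf Sg d c w (l1 ++ l2) = true ->
  cwf Sg d c (ctgt Sg w l2) l1 = true /\ cwf Sg d c w l2 = true.
Proof.
  induction l1 as [|L l1 IH]; intros H.
  - simpl in *. split; auto. destruct (Ty_ich H) as [T _]. exact (Ty_wft T).
  - simpl in H. apply andb_true_iff in H as [H H3]. destruct (IH H3) as [A B]. split; auto.
    simpl. rewrite A, ctgt_app, H. auto.
Qed.

Lemma cwf_app_intro d c w l1 l2 : cwf Sg d c (ctgt Sg w l2) l1 = true -> cwf Sg d c w l2 = true ->
  cwf Sg d c w (l1 ++ l2) = true.
Proof.
  induction l1 as [|L l1 IH]; intros H1 H2; simpl in *; auto.
  apply andb_true_iff in H1 as [H H3]. rewrite (IH H3 H2). rewrite <- ctgt_app. rewrite H. auto.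
Qed.

Lemma ich_app d c w l1 l2 : cwf Sg d c w (l1 ++ l2) = true ->
  ich d w (l1 ++ l2) = ich d (ctgt Sg w l2) l1 ⋅ ich d w l2.
Proof.
  induction l1 as [|L l1 IH]; intros H.
  - simpl in *. destruct (Ty_ich H) as [_ [A _]]. auto.
  - pose proof H as H0. apply cwf_cons in H as (HL & E & H).
    destruct (cwf_app H) as [Ha Hb]. simpl. rewrite (IH H).
    destruct (Ty_layer HL) as [TL _]. destruct (Ty_ich Ha) as [Ta _]. destruct (Ty_ich Hb) as [Tb _].
    rewrite E in TL. rewrite <- ctgt_app in TL. apply (vA TL Ta Tb).
Qed.

Lemma lwf_wL d x c P L : lwf Sg d x L = true -> wfw x c P = true -> lwf Sg d c (wL P L) = true.
Proof.
  destruct L as [[p j] q]. intros H HP. apply lwf_parts in H as (Hj & Hq & Hp). simpl.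
  rewrite (proj2 (Nat.ltb_lt _ _) Hj), Hq. rewrite (wfw_app HP Hp). auto.
Qed.

Lemma lwf_wR d x c Q L : lwf Sg x c L = true -> wfw d x Q = true -> lwf Sg d c (wR Q L) = true.
Proof.
  destruct L as [[p j] q]. intros H HQ. apply lwf_parts in H as (Hj & Hq & Hp). simpl.
  rewrite (proj2 (Nat.ltb_lt _ _) Hj), Hp. rewrite (wfw_app Hq HQ). auto.
Qed.

Lemma WL_il d x c P L : lwf Sg d x L = true -> wfw x c P = true ->
  hcomp (ib x P) (il d L) = il d (wL P L).
Proof.
  destruct L as [[p j] q]. intros H HP. apply lwf_parts in H as (Hj & Hq & Hp). simpl wL.
  rewrite !il_eq. rewrite (ib_app HP Hp).
  apply (hA (Ty_ib HP) (Ty_ib Hp) (Ty_h (Ty_ec Hj) (Ty_ib Hq))).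
Qed.

Lemma WR_il d x c Q L : lwf Sg x c L = true -> wfw d x Q = true ->
  hcomp (il x L) (ib d Q) = il d (wR Q L).
Proof.
  destruct L as [[p j] q]. intros H HQ. apply lwf_parts in H as (Hj & Hq & Hp). simpl wR.
  rewrite !il_eq. rewrite (ib_app Hq HQ).
  rewrite <- (hA (Ty_ib Hp) (Ty_h (Ty_ec Hj) (Ty_ib Hq)) (Ty_ib HQ)).
  rewrite <- (hA (Ty_ec Hj) (Ty_ib Hq) (Ty_ib HQ)). reflexivity.
Qed.

Lemma lsrc_wL P L : lsrc Sg (wL P L) = P ++ lsrc Sg L.
Proof. destruct L as [[p j] q]; simpl. now rewrite !app_assoc. Qed.
Lemma ltgt_wL P L : ltgt Sg (wL P L) = P ++ ltgt Sg L.
Proof. destruct L as [[p j] q]; simpl. now rewrite !app_assoc. Qed.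
Lemma lsrc_wR Q L : lsrc Sg (wR Q L) = lsrc Sg L ++ Q.
Proof. destruct L as [[p j] q]; simpl. rewrite !app_assoc; auto. Qed.
Lemma ltgt_wR Q L : ltgt Sg (wR Q L) = ltgt Sg L ++ Q.
Proof. destruct L as [[p j] q]; simpl. rewrite !app_assoc; auto. Qed.

Lemma WL_ich d x c w P ls : cwf Sg d x w ls = true -> wfw x c P = true ->
  hcomp (ib x P) (ich d w ls) = ich d (P ++ w) (map (wL P) ls) /\
  cwf Sg d c (P ++ w) (map (wL P) ls) = true /\ ctgt Sg (P ++ w) (map (wL P) ls) = P ++ ctgt Sg w ls.
Proof.
  intros H HP. induction ls as [|L ls IH].
  - simpl in *. split; [|split]; auto.
    + symmetry; apply (ib_app HP H).
    + apply (wfw_app HP H).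
  - apply cwf_cons in H as (HL & E & H). destruct (IH H) as (I1 & I2 & I3).
    destruct (Ty_layer HL) as [TL _]. destruct (Ty_ich H) as [TI _]. rewrite E in TL.
    split; [|split].
    + simpl. rewrite <- (hPP HP TL TI). rewrite I1. rewrite (WL_il HL HP). reflexivity.
    + simpl. rewrite (lwf_wL HL HP), I2, I3, lsrc_wL, E, leqb_refl. auto.
    + simpl. apply ltgt_wL.
Qed.

Lemma WR_ich d x c w Q ls : cwf Sg x c w ls = true -> wfw d x Q = true ->
  hcomp (ich x w ls) (ib d Q) = ich d (w ++ Q) (map (wR Q) ls) /\
  cwf Sg d c (w ++ Q) (map (wR Q) ls) = true /\ ctgt Sg (w ++ Q) (map (wR Q) ls) = ctgt Sg w ls ++ Q.
Proof.
  intros H HQ. induction ls as [|L ls IH].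
  - simpl in *. split; [|split]; auto.
    + symmetry; apply (ib_app H HQ).
    + apply (wfw_app H HQ).
  - apply cwf_cons in H as (HL & E & H). destruct (IH H) as (I1 & I2 & I3).
    destruct (Ty_layer HL) as [TL _]. destruct (Ty_ich H) as [TI _]. rewrite E in TL.
    pose proof (Ty_ib HQ) as TQ.
    split; [|split].
    + simpl. rewrite <- (ib_idem HQ) at 1. rewrite (hv TL TI TQ TQ).
      rewrite I1. rewrite (WR_il HL HQ). reflexivity.
    + simpl. rewrite (lwf_wR HL HQ), I2, I3, lsrc_wR, E, leqb_refl. auto.
    + simpl. apply ltgt_wR.
Qed.

Lemma nf_sound t : forall s tt d c, tyf Sg t = Some (s, tt, d, c) ->
  cwf Sg d c s (nf Sg t) = true /\ ctgt Sg s (nf Sg t) = tt /\ ich d s (nf Sg t) = it t.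
Proof.
  induction t as [j|i|a IHa b IHb|a IHa b IHb]; intros s tt d c H; simpl in H; cbn [nf it].
  - destruct (j <? sn2 Sg) eqn:Hj; [|discriminate]. injection H; intros; subst.
    apply Nat.ltb_lt in Hj. destruct (HV2 j Hj) as (WS & WT & S1 & T1 & A1 & A2).
    simpl. rewrite app_nil_r. rewrite (proj2 (Nat.ltb_lt _ _) Hj), !Nat.eqb_refl, leqb_refl, WS.
    split; [|split]; try (simpl; rewrite ?app_nil_r; reflexivity).
    try rewrite il_eq; simpl.
    pose proof (hcomp_id_r (ec j)) as E. rewrite S1, (proj1 (wfw_obj WS)) in E. rewrite E.
    pose proof (hcomp_id_l (ec j)) as E'. rewrite S1, (proj2 (wfw_obj WS)) in E'. rewrite E'. auto.
  - destruct (i <? sn1 Sg) eqn:Hi; [|discriminate]. injection H; intros; subst.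
    apply Nat.ltb_lt in Hi. simpl. split; [|split]; auto.
    + rewrite (proj2 (Nat.ltb_lt _ _) Hi), !Nat.eqb_refl. auto.
    + destruct (HV1 i Hi) as (D & _ & S1 & _). pose proof (hcomp_id_r (eub i)) as E.
      rewrite S1, D in E. exact E.
  - destruct (tyf Sg a) as [[[[sa ta] da] ca]|]; [|discriminate].
    destruct (tyf Sg b) as [[[[sb tb] db] cb]|]; [|discriminate].
    destruct (leqb sa tb && Nat.eqb da db && Nat.eqb ca cb) eqn:E; [|discriminate].
    apply andb_true_iff in E as [E E3]. apply andb_true_iff in E as [E1 E2].
    apply leqb_eq in E1. apply Nat.eqb_eq in E2, E3. subst.
    injection H; intros; subst.
    destruct (IHa _ _ _ _ eq_refl) as (A1 & A2 & A3). destruct (IHb _ _ _ _ eq_refl) as (B1 & B2 & B3).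
    rewrite <- B2 in A1.
    split; [|split].
    + apply cwf_app_intro; auto.
    + rewrite <- ctgt_app. rewrite B2. auto.
    + rewrite (ich_app (cwf_app_intro A1 B1)). rewrite B2. rewrite A3, B3. reflexivity.
  - destruct (tyf Sg a) as [[[[sa ta] da] ca]|]; [|discriminate].
    destruct (tyf Sg b) as [[[[sb tb] db] cb]|]; [|discriminate].
    destruct (Nat.eqb da cb) eqn:E; [|discriminate]. apply Nat.eqb_eq in E. subst.
    injection H; intros; subst.
    destruct (IHa _ _ _ _ eq_refl) as (A1 & A2 & A3). destruct (IHb _ _ _ _ eq_refl) as (B1 & B2 & B3).
    destruct (Ty_ich A1) as [TA [AA1 AA2]]. destruct (Ty_ich B1) as [TB [AB1 AB2]].
    rewrite A2 in TA, AA1. rewrite B2 in TB, AB1.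
    pose proof (Ty_ib (Ty_wft TB)) as Ttb. pose proof (Ty_ib (Ty_wfs TA)) as Tsa.
    destruct (WR_ich A1 (Ty_wft TB)) as (R1 & R2 & R3).
    destruct (WL_ich B1 (Ty_wfs TA)) as (L1 & L2 & L3).
    rewrite B2 in L3. rewrite A2 in R3.
    assert (C : cwf Sg d c (sa ++ sb) (map (wR tb) (nf Sg a) ++ map (wL sa) (nf Sg b)) = true).
    { apply cwf_app_intro; auto. rewrite L3; auto. }
    split; [|split]; auto.
    + rewrite <- ctgt_app, L3. auto.
    + rewrite (ich_app C). rewrite L3. rewrite <- R1, <- L1. rewrite <- A3, <- B3.
      rewrite <- (hv TA Tsa Ttb TB). rewrite AA2, AB1. reflexivity.
Qed.

Definition tyok (t : tm) : bool := match tyf Sg t with Some _ => true | None => false end.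
Definition ttgt (t : tm) : list nat := match tyf Sg t with Some (_, x, _, _) => x | None => [] end.

Lemma it_ty t : tyok t = true ->
  src2 (it t) = iw (tdom Sg t) (tsrc Sg t) /\ tgt2 (it t) = iw (tdom Sg t) (ttgt t).
Proof.
  unfold tyok, tdom, tsrc, ttgt. destruct (tyf Sg t) as [[[[s tt] d] c]|] eqn:E; [|discriminate].
  intros _. destruct (nf_sound E) as (A1 & A2 & A3). destruct (Ty_ich A1) as [(S1 & T1 & _) _].
  rewrite <- A3. rewrite A2 in T1. auto.
Qed.

Definition RuleOK (r : Rule) := rule_ok_b Sg r = true /\ ich (rd r) (rw r) (rl r) = ich (rd r) (rw r) (rr r).

Lemma rule_of_tm t1 t2 : tgood Sg t1 t2 = true -> it t1 = it t2 -> RuleOK (mkrule Sg t1 t2).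
Proof.
  unfold tgood, mkrule, tsrc, tdom, tcod, RuleOK, rule_ok_b. simpl.
  destruct (tyf Sg t1) as [[[[s t] d] c]|] eqn:E1; [|discriminate].
  destruct (tyf Sg t2) as [[[[s' t'] d'] c']|] eqn:E2; [|discriminate].
  intros H Heq. apply andb_true_iff in H as [H H3]. apply andb_true_iff in H as [H H2].
  apply andb_true_iff in H as [H H1]. apply leqb_eq in H, H1. apply Nat.eqb_eq in H2, H3. subst.
  destruct (nf_sound E1) as (A1 & A2 & A3). destruct (nf_sound E2) as (B1 & B2 & B3).
  rewrite A1, B1, A2, B2, leqb_refl. split; auto. congruence.
Qed.

Lemma RuleOK_rev r : RuleOK r -> RuleOK (rrev r).
Proof.
  unfold RuleOK, rrev, rule_ok_b; simpl. intros [H E]. split; auto.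
  apply andb_true_iff in H as [H H3]. apply andb_true_iff in H as [H1 H2].
  rewrite H1, H2. apply leqb_eq in H3. rewrite H3, leqb_refl. auto.
Qed.

Lemma whisk_ich d c P Q r0 rc0 w0 ls : cwf Sg r0 rc0 w0 ls = true -> wfw d r0 Q = true -> wfw rc0 c P = true ->
  ich d (P ++ w0 ++ Q) (whisk P Q ls) = hcomp (ib rc0 P) (hcomp (ich r0 w0 ls) (ib d Q)) /\
  cwf Sg d c (P ++ w0 ++ Q) (whisk P Q ls) = true /\
  ctgt Sg (P ++ w0 ++ Q) (whisk P Q ls) = P ++ ctgt Sg w0 ls ++ Q.
Proof.
  intros H HQ HP. destruct (WR_ich H HQ) as (R1 & R2 & R3).
  destruct (WL_ich R2 HP) as (L1 & L2 & L3). unfold whisk.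
  split; [|split]; auto.
  - rewrite <- L1, <- R1. auto.
  - rewrite L3, R3. auto.
Qed.

Lemma rule_step r d c w ls n P Q : RuleOK r -> check_rule Sg d c w ls n P Q r = true ->
  ich d w ls = ich d w (apply_rule ls n P Q r).
Proof.
  intros [Hr Eq] H. unfold check_rule in H.
  repeat (apply andb_true_iff in H as [H ?]).
  rename H into Hls. match goal with H : leqb _ _ = true |- _ => apply leqb_eq in H end.
  match goal with H : layseqb _ _ = true |- _ => apply layseqb_eq in H end.
  unfold rule_ok_b in Hr. apply andb_true_iff in Hr as [Hr Hr3]. apply andb_true_iff in Hr as [Hr1 Hr2].
  apply leqb_eq in Hr3.
  assert (Els : ls = firstn n ls ++ whisk P Q (rl r) ++ skipn (n + length (rl r)) ls).
  { rewrite <- (firstn_skipn n ls) at 1. f_equal.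
    rewrite <- (firstn_skipn (length (rl r)) (skipn n ls)) at 1. f_equal; auto.
    rewrite skipn_skipn. rewrite Nat.add_comm. auto. }
  unfold apply_rule in *.
  set (l1 := firstn n ls) in *. set (l2 := skipn (n + length (rl r)) ls) in *.
  match goal with H : cwf Sg d c w (l1 ++ _) = true |- _ => rename H into Hres end.
  rewrite Els in Hls. rewrite Els at 1.
  destruct (whisk_ich Hr1 H2 H1) as (W1 & W2 & W3).
  destruct (whisk_ich Hr2 H2 H1) as (W4 & W5 & W6).
  rewrite (ich_app Hls). rewrite (ich_app Hres).
  destruct (cwf_app Hls) as [_ Hls2]. destruct (cwf_app Hres) as [_ Hres2].
  rewrite (ich_app Hls2), (ich_app Hres2).
  match goal with H : ctgt Sg w l2 = _ |- _ => rewrite H end.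
  rewrite <- !ctgt_app. match goal with H : ctgt Sg w l2 = _ |- _ => rewrite H end.
  rewrite W1, W3, W4, W6, Eq, Hr3. reflexivity.
Qed.

Lemma to_chain t1 t2 : tgood Sg t1 t2 = true ->
  ich (tdom Sg t1) (tsrc Sg t1) (nf Sg t1) = ich (tdom Sg t1) (tsrc Sg t1) (nf Sg t2) -> it t1 = it t2.
Proof.
  unfold tgood, tsrc, tdom.
  destruct (tyf Sg t1) as [[[[s t] d] c]|] eqn:E1; [|discriminate].
  destruct (tyf Sg t2) as [[[[s' t'] d'] c']|] eqn:E2; [|discriminate].
  intros H Heq. apply andb_true_iff in H as [H H3]. apply andb_true_iff in H as [H H2].
  apply andb_true_iff in H as [H H1]. apply leqb_eq in H, H1. apply Nat.eqb_eq in H2, H3. subst.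
  destruct (nf_sound E1) as (A1 & A2 & A3). destruct (nf_sound E2) as (B1 & B2 & B3).
  congruence.
Qed.

Definition swap_res (n : nat) (ls : list layer) : list layer :=
  match swapf Sg n ls with Some l => l | None => ls end.
Definition swap_chk (d c : nat) (w : list nat) (n : nat) (ls : list layer) : bool :=
  cwf Sg d c w ls && match swapf Sg n ls with Some l => cwf Sg d c w l | None => false end.

Lemma swap_step d c w n ls : swap_chk d c w n ls = true -> ich d w ls = ich d w (swap_res n ls).
Proof.
  unfold swap_chk, swap_res. intros H. apply andb_true_iff in H as [H1 H2].
  destruct (swapf Sg n ls) as [l|] eqn:E; [|discriminate].
  eapply swapf_sound; eauto.
Qed.

End Sem.

Ltac lookup x l := lazymatch l with
 | cons ?y ?r => lazymatch x with y => constr:(0) | _ => let n := lookup x r in constr:(S n) end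
 end.

Ltac reif bl cl t := lazymatch t with
 | hcomp ?a ?b => let x := reif bl cl a in let y := reif bl cl b in constr:(TH x y)
 | vcomp ?a ?b => let x := reif bl cl a in let y := reif bl cl b in constr:(TV x y)
 | _ => match constr:(tt) with
        | _ => let n := lookup t cl in constr:(TA n)
        | _ => let n := lookup t bl in constr:(TB n)
        | _ => fail 100 "reif: unknown atom" t
        end
 end.

Ltac norm_goal := lazymatch goal with |- ich ?K ?Sg ?ob ?eub ?ec ?d ?w ?l1 = ich _ _ _ _ _ _ _ ?l2 =>
  let d0 := eval vm_compute in d in let w0 := eval vm_compute in w in
  let l10 := eval vm_compute in l1 in let l20 := eval vm_compute in l2 in
  change (ich K Sg ob eub ec d0 w0 l10 = ich K Sg ob eub ec d0 w0 l20) end.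

(* convert goal l = r into chain equation; bl: list of bars, cl: list of 2-atoms *)
Ltac start bl cl := lazymatch goal with
 | HV1 : V1 ?K ?Sg ?ob ?eu ?eub, HV2 : V2 _ _ _ _ _ ?ec |- ?l = ?r =>
   let t1 := reif bl cl l in let t2 := reif bl cl r in
   change (it K eub ec t1 = it K eub ec t2);
   apply (to_chain HV1 HV2); [vm_compute; reflexivity|]; norm_goal
 end.

Ltac sw n := lazymatch goal with
 | HV1 : V1 _ _ _ _ _, HV2 : V2 _ _ _ _ _ _ |- ich ?K ?Sg ?ob ?eub ?ec ?d ?w ?l = ?R =>
   let H := fresh "H" in
   assert (H : swap_chk Sg d (jo Sg d w) w n l = true) by (vm_compute; reflexivity);
   refine (eq_trans (swap_step HV1 HV2 H) _); clear H;
   let l' := eval vm_compute in (swap_res Sg n l) in change (ich K Sg ob eub ec d w l' = R)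
 end.

Ltac rul r n P Q := lazymatch goal with
 | HV1 : V1 _ _ _ _ _, HV2 : V2 _ _ _ _ _ _ |- ich ?K ?Sg ?ob ?eub ?ec ?d ?w ?l = ?R =>
   lazymatch type of r with RuleOK _ _ _ _ ?rr =>
   let H := fresh "H" in
   assert (H : check_rule Sg d (jo Sg d w) w l n P Q rr = true) by (vm_compute; reflexivity);
   refine (eq_trans (rule_step HV1 HV2 r H) _); clear H;
   let l' := eval vm_compute in (apply_rule l n P Q rr) in change (ich K Sg ob eub ec d w l' = R)
   end
 end.
Ltac rulr r n P Q := rul (RuleOK_rev r) n P Q.

Ltac mkrule bl cl H name := lazymatch goal with
 | HV1 : V1 ?K ?Sg ?ob ?eu ?eub, HV2 : V2 _ _ _ _ _ ?ec |- _ =>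
   lazymatch type of H with ?l = ?r =>
   let t1 := reif bl cl l in let t2 := reif bl cl r in
   let rr := eval vm_compute in (mkrule Sg t1 t2) in
   assert (name : RuleOK Sg ob eub ec rr) by
     (exact (rule_of_tm HV1 HV2 (t1:=t1) (t2:=t2) ltac:(vm_compute; reflexivity) H))
   end end.

Set Implicit Arguments.
Unset Strict Implicit.

Lemma c1r (K : TwoCat) (u : C1 K) o : dom1 u = o -> comp1 u (id1 o) = u.
Proof. intros <-. apply comp1_id_r. Qed.
Lemma h1r (K : TwoCat) (b : C2 K) o : dom1 (src2 b) = o -> hcomp b (id2 (id1 o)) = b.
Proof. intros <-. apply hcomp_id_r. Qed.

Ltac destr_all := repeat match goal with H : _ /\ _ |- _ => destruct H end.
Ltac unf := unfold is_wdl2_hom, is_wdl2, is_wdl1, is_wdl, is_mnd1, is_monad, khom, kcell, cell2, hom1, kcomp1, kid1, wl, wr, lambar in *; simpl in *.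

Definition SGw : Sig := MkSig 2 5 [0;0] [0;0] [[0;0];[];[1;1];[];[0;1]] [[0];[0];[1];[1];[1;0]] [0;0;0;0;0] [0;0;0;0;0].

Lemma HVw (K : TwoCat) (A : Ob K) (t : kb1 K) (mut etat : C2 K) (s : kb1 K) (mus etas lam : C2 K) :
  is_wdl A t mut etat s mus etas lam ->
  V1 K SGw (fun _ => A) (fun i => nth i [fst t; fst s] (fst t)) (fun i => nth i [snd t; snd s] (snd t)) /\
  V2 K SGw (fun _ => A) (fun i => nth i [fst t; fst s] (fst t)) (fun i => nth i [snd t; snd s] (snd t))
    (fun j => nth j [mut; etat; mus; etas; lam] mut).
Proof.
  intros H. unf. destr_all. split.
  - intros i Hi; simpl in Hi. destruct i as [|[|i]]; [| |lia]; simpl; repeat split; auto;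
    try congruence.
  - intros j Hj; simpl in Hj.
    destruct j as [|[|[|[|[|j]]]]]; [| | | | |lia]; simpl;
    repeat rewrite c1r by congruence; repeat rewrite h1r by congruence;
    repeat split; auto; try congruence.
Qed.


Set Implicit Arguments.
Unset Strict Implicit.

Ltac wsetup H := destruct (HVw H) as [HV1 HV2]; pose proof H as H';
  unfold is_wdl in H'; destruct H' as (Mt & Ms & Kl & W1 & W2 & W3 & W4);
  unfold is_monad in Mt, Ms; destruct Mt as (_ & _ & _ & At & Ut1 & Ut2);
  destruct Ms as (_ & _ & _ & As & Us1 & Us2).
Ltac wunf := unfold cmp_mu, lambar, wl, wr, kcomp1 in *; simpl in *.

Lemma S1w (K : TwoCat) (A : Ob K) (t : kb1 K) (mut etat : C2 K) (s : kb1 K) (mus etas lam : C2 K) :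
  is_wdl A t mut etat s mus etas lam -> lambar t s mus etas lam ⋅ lam = lam.
Proof.
  intros H. wsetup H.
  wunf.
  mkrule constr:([snd t; snd s]) constr:([mut; etat; mus; etas; lam]) W2 RW2.
  mkrule constr:([snd t; snd s]) constr:([mut; etat; mus; etas; lam]) Us1 RUs1.
  start constr:([snd t; snd s]) constr:([mut; etat; mus; etas; lam]).
  sw 2.
  rulr RW2 0 (@nil nat) (@nil nat).
  rul RUs1 1 [0] (@nil nat).
  reflexivity.
Qed.

Lemma S2w (K : TwoCat) (A : Ob K) (t : kb1 K) (mut etat : C2 K) (s : kb1 K) (mus etas lam : C2 K) :
  is_wdl A t mut etat s mus etas lam -> lambar t s mus etas lam ⋅ lambar t s mus etas lam = lambar t s mus etas lam.
Proof.
  intros H. wsetup H.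
  pose proof (S1w H) as S1.
  wunf.
  mkrule constr:([snd t; snd s]) constr:([mut; etat; mus; etas; lam]) As RAs.
  mkrule constr:([snd t; snd s]) constr:([mut; etat; mus; etas; lam]) S1 RS1.
  start constr:([snd t; snd s]) constr:([mut; etat; mus; etas; lam]).
  sw 2.
  sw 1.
  rulr RAs 0 (@nil nat) [0].
  rul RS1 1 [1] (@nil nat).
  reflexivity.
Qed.

Lemma S3w (K : TwoCat) (A : Ob K) (t : kb1 K) (mut etat : C2 K) (s : kb1 K) (mus etas lam : C2 K) :
  is_wdl A t mut etat s mus etas lam -> lambar t s mus etas lam ⋅ wr mus t = wr mus t ⋅ wl s (lambar t s mus etas lam).
Proof.
  intros H. wsetup H.
  wunf.
  mkrule constr:([snd t; snd s]) constr:([mut; etat; mus; etas; lam]) As RAs.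
  start constr:([snd t; snd s]) constr:([mut; etat; mus; etas; lam]).
  sw 2.
  sw 1.
  rulr RAs 0 (@nil nat) [0].
  reflexivity.
Qed.

Lemma S4w (K : TwoCat) (A : Ob K) (t : kb1 K) (mut etat : C2 K) (s : kb1 K) (mus etas lam : C2 K) :
  is_wdl A t mut etat s mus etas lam -> lambar t s mus etas lam = wl s mut ⋅ wr lam t ⋅ wr etat (kcomp1 s t).
Proof.
  intros H. wsetup H.
  pose proof (S3w H) as S3.
  wunf.
  mkrule constr:([snd t; snd s]) constr:([mut; etat; mus; etas; lam]) W4 RW4.
  mkrule constr:([snd t; snd s]) constr:([mut; etat; mus; etas; lam]) W3 RW3.
  mkrule constr:([snd t; snd s]) constr:([mut; etat; mus; etas; lam]) S3 RS3.
  mkrule constr:([snd t; snd s]) constr:([mut; etat; mus; etas; lam]) Us1 RUs1.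
  start constr:([snd t; snd s]) constr:([mut; etat; mus; etas; lam]).
  rul RW4 1 [1] (@nil nat).
  rul RW3 2 [1] [0].
  sw 0.
  rulr RS3 1 (@nil nat) [0].
  sw 0.
  sw 3.
  sw 5.
  sw 2.
  sw 4.
  sw 1.
  sw 3.
  sw 2.
  rul RUs1 1 (@nil nat) [1;0].
  sw 0.
  rulr RW3 1 (@nil nat) [0].
  reflexivity.
Qed.

Lemma S5w (K : TwoCat) (A : Ob K) (t : kb1 K) (mut etat : C2 K) (s : kb1 K) (mus etas lam : C2 K) :
  is_wdl A t mut etat s mus etas lam -> lambar t s mus etas lam ⋅ wl s mut = wl s mut ⋅ wr (lambar t s mus etas lam) t.
Proof.
  intros H. wsetup H.
  pose proof (S4w H) as S4.
  wunf.
  mkrule constr:([snd t; snd s]) constr:([mut; etat; mus; etas; lam]) S4 RS4.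
  mkrule constr:([snd t; snd s]) constr:([mut; etat; mus; etas; lam]) At RAt.
  start constr:([snd t; snd s]) constr:([mut; etat; mus; etas; lam]).
  rul RS4 0 (@nil nat) (@nil nat).
  sw 2.
  sw 1.
  rul RAt 0 [1] (@nil nat).
  rulr RS4 1 (@nil nat) [0].
  reflexivity.
Qed.

Lemma M1w (K : TwoCat) (A : Ob K) (t : kb1 K) (mut etat : C2 K) (s : kb1 K) (mus etas lam : C2 K) :
  is_wdl A t mut etat s mus etas lam -> cmp_mu t s mut mus lam ⋅ wr (lambar t s mus etas lam) (kcomp1 s t) = cmp_mu t s mut mus lam.
Proof.
  intros H. wsetup H.
  wunf.
  mkrule constr:([snd t; snd s]) constr:([mut; etat; mus; etas; lam]) As RAs.
  mkrule constr:([snd t; snd s]) constr:([mut; etat; mus; etas; lam]) W2 RW2.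
  mkrule constr:([snd t; snd s]) constr:([mut; etat; mus; etas; lam]) Us2 RUs2.
  start constr:([snd t; snd s]) constr:([mut; etat; mus; etas; lam]).
  sw 2.
  sw 1.
  rulr RAs 0 (@nil nat) [0].
  sw 1.
  rulr RW2 2 [1] [0].
  rul RUs2 3 [1;0] [0].
  sw 0.
  sw 0.
  reflexivity.
Qed.

Lemma M2w (K : TwoCat) (A : Ob K) (t : kb1 K) (mut etat : C2 K) (s : kb1 K) (mus etas lam : C2 K) :
  is_wdl A t mut etat s mus etas lam -> cmp_mu t s mut mus lam ⋅ wl (kcomp1 s t) (lambar t s mus etas lam) = cmp_mu t s mut mus lam.
Proof.
  intros H. wsetup H.
  pose proof (S4w H) as S4.
  wunf.
  mkrule constr:([snd t; snd s]) constr:([mut; etat; mus; etas; lam]) S4 RS4.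
  mkrule constr:([snd t; snd s]) constr:([mut; etat; mus; etas; lam]) At RAt.
  mkrule constr:([snd t; snd s]) constr:([mut; etat; mus; etas; lam]) W1 RW1.
  mkrule constr:([snd t; snd s]) constr:([mut; etat; mus; etas; lam]) Ut1 RUt1.
  start constr:([snd t; snd s]) constr:([mut; etat; mus; etas; lam]).
  rul RS4 3 [1;0] (@nil nat).
  sw 0.
  sw 2.
  sw 1.
  rul RAt 0 [1] (@nil nat).
  sw 1.
  rulr RW1 2 [1] [0].
  rul RUt1 3 [1] [1;0].
  sw 0.
  reflexivity.
Qed.

Set Implicit Arguments.
Unset Strict Implicit.

Definition SGA : Sig := MkSig 5 12 [0;0;1;1;0] [0;0;1;1;1] [[0;0];[];[1;1];[];[0;1];[2;2];[];[3;3];[];[2;3];[2;4];[3;4]] [[0];[0];[1];[1];[1;0];[2];[2];[3];[3];[3;2];[4;0];[4;1]] [0;0;0;0;0;1;1;1;1;1;0;0] [0;0;0;0;0;1;1;1;1;1;1;1].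

Lemma HVA (K : TwoCat) (A A' : Ob K) (t : kb1 K) (mut etat : C2 K) (s : kb1 K) (mus etas lam : C2 K)
  (t' : kb1 K) (mut' etat' : C2 K) (s' : kb1 K) (mus' etas' lam' : C2 K) (v : kb1 K) (xi zeta : C2 K) :
  is_wdl A t mut etat s mus etas lam -> is_wdl A' t' mut' etat' s' mus' etas' lam' ->
  is_wdl1 A A' t mut etat s mus etas lam t' mut' etat' s' mus' etas' lam' v xi zeta ->
  V1 K SGA (fun i => nth i [A; A'] A) (fun i => nth i [fst t; fst s; fst t'; fst s'; fst v] (fst t))
     (fun i => nth i [snd t; snd s; snd t'; snd s'; snd v] (snd t)) /\
  V2 K SGA (fun i => nth i [A; A'] A) (fun i => nth i [fst t; fst s; fst t'; fst s'; fst v] (fst t))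
     (fun i => nth i [snd t; snd s; snd t'; snd s'; snd v] (snd t))
     (fun j => nth j [mut; etat; mus; etas; lam; mut'; etat'; mus'; etas'; lam'; xi; zeta] mut).
Proof.
  intros H1 H2 H3. unf. destr_all. split.
  - intros i Hi; simpl in Hi. do 5 (destruct i as [|i]; [simpl; repeat split; auto; congruence|]). lia.
  - intros j Hj; simpl in Hj.
    do 12 (destruct j as [|j]; [simpl; repeat rewrite c1r by congruence; repeat rewrite h1r by congruence;
      repeat split; auto; congruence|]). lia.
Qed.

Ltac aunf := unfold cmp1, cmp_mu, cmp_eta, lambar, wl, wr, kcomp1 in *; simpl in *.

Lemma LemA_E1 (K : TwoCat) (A A' : Ob K) (t : kb1 K) (mut etat : C2 K) (s : kb1 K) (mus etas lam : C2 K) (t' : kb1 K) (mut' etat' : C2 K) (s' : kb1 K) (mus' etas' lam' : C2 K) (v : kb1 K) (xi zeta : C2 K) :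
  is_wdl A t mut etat s mus etas lam -> is_wdl A' t' mut' etat' s' mus' etas' lam' -> is_wdl1 A A' t mut etat s mus etas lam t' mut' etat' s' mus' etas' lam' v xi zeta -> hcomp (snd v) (lambar t s mus etas lam) ⋅ (wl v (lambar t s mus etas lam) ⋅ wr zeta t ⋅ wl s' xi) = wl v (lambar t s mus etas lam) ⋅ wr zeta t ⋅ wl s' xi.
Proof.
  intros H1 H2 H3. destruct (HVA H1 H2 H3) as [HV1 HV2].
  pose proof (S2w H1) as S2. pose proof (S3w H1) as S3. pose proof (S5w H1) as S5.
  pose proof (M1w H1) as M1. pose proof (M2w H1) as M2.
  pose proof H3 as H3'. unfold is_wdl1, is_mnd1 in H3'.
  destruct H3' as ((_ & _ & Xm & Xu) & (_ & _ & Zm & Zu) & C).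
  aunf.
  mkrule constr:([snd t; snd s; snd t'; snd s'; snd v]) constr:([mut; etat; mus; etas; lam; mut'; etat'; mus'; etas'; lam'; xi; zeta]) S2 RS2.
  start constr:([snd t; snd s; snd t'; snd s'; snd v]) constr:([mut; etat; mus; etas; lam; mut'; etat'; mus'; etas'; lam'; xi; zeta]).
  rul RS2 0 [4] (@nil nat).
  reflexivity.
Qed.

Lemma LemA_E2 (K : TwoCat) (A A' : Ob K) (t : kb1 K) (mut etat : C2 K) (s : kb1 K) (mus etas lam : C2 K) (t' : kb1 K) (mut' etat' : C2 K) (s' : kb1 K) (mus' etas' lam' : C2 K) (v : kb1 K) (xi zeta : C2 K) :
  is_wdl A t mut etat s mus etas lam -> is_wdl A' t' mut' etat' s' mus' etas' lam' -> is_wdl1 A A' t mut etat s mus etas lam t' mut' etat' s' mus' etas' lam' v xi zeta -> (wl v (lambar t s mus etas lam) ⋅ wr zeta t ⋅ wl s' xi) ⋅ hcomp (lambar t' s' mus' etas' lam') (snd v) = wl v (lambar t s mus etas lam) ⋅ wr zeta t ⋅ wl s' xi.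
Proof.
  intros H1 H2 H3. destruct (HVA H1 H2 H3) as [HV1 HV2].
  pose proof (S2w H1) as S2. pose proof (S3w H1) as S3. pose proof (S5w H1) as S5.
  pose proof (M1w H1) as M1. pose proof (M2w H1) as M2.
  pose proof H3 as H3'. unfold is_wdl1, is_mnd1 in H3'.
  destruct H3' as ((_ & _ & Xm & Xu) & (_ & _ & Zm & Zu) & C).
  aunf.
  mkrule constr:([snd t; snd s; snd t'; snd s'; snd v]) constr:([mut; etat; mus; etas; lam; mut'; etat'; mus'; etas'; lam'; xi; zeta]) Zm RZm.
  mkrule constr:([snd t; snd s; snd t'; snd s'; snd v]) constr:([mut; etat; mus; etas; lam; mut'; etat'; mus'; etas'; lam'; xi; zeta]) S3 RS3.
  mkrule constr:([snd t; snd s; snd t'; snd s'; snd v]) constr:([mut; etat; mus; etas; lam; mut'; etat'; mus'; etas'; lam'; xi; zeta]) C RC.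
  mkrule constr:([snd t; snd s; snd t'; snd s'; snd v]) constr:([mut; etat; mus; etas; lam; mut'; etat'; mus'; etas'; lam'; xi; zeta]) Zu RZu.
  start constr:([snd t; snd s; snd t'; snd s'; snd v]) constr:([mut; etat; mus; etas; lam; mut'; etat'; mus'; etas'; lam'; xi; zeta]).
  sw 2.
  sw 4.
  sw 1.
  sw 3.
  sw 2.
  rul RZm 1 (@nil nat) [1;0].
  sw 3.
  sw 4.
  sw 2.
  sw 3.
  sw 1.
  sw 2.
  rul RS3 0 [4] (@nil nat).
  sw 3.
  sw 2.
  sw 1.
  rulr RC 2 [3] (@nil nat).
  rul RZu 4 [3;2] (@nil nat).
  sw 1.
  sw 3.
  sw 2.
  reflexivity.
Qed.

Lemma LemA_E3 (K : TwoCat) (A A' : Ob K) (t : kb1 K) (mut etat : C2 K) (s : kb1 K) (mus etas lam : C2 K) (t' : kb1 K) (mut' etat' : C2 K) (s' : kb1 K) (mus' etas' lam' : C2 K) (v : kb1 K) (xi zeta : C2 K) :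
  is_wdl A t mut etat s mus etas lam -> is_wdl A' t' mut' etat' s' mus' etas' lam' -> is_wdl1 A A' t mut etat s mus etas lam t' mut' etat' s' mus' etas' lam' v xi zeta -> (wl v (lambar t s mus etas lam) ⋅ wr zeta t ⋅ wl s' xi) ⋅ wr (cmp_mu t' s' mut' mus' lam') v = wl v (cmp_mu t s mut mus lam) ⋅ wr (wl v (lambar t s mus etas lam) ⋅ wr zeta t ⋅ wl s' xi) (cmp1 t s mus etas lam) ⋅ wl (cmp1 t' s' mus' etas' lam') (wl v (lambar t s mus etas lam) ⋅ wr zeta t ⋅ wl s' xi).
Proof.
  intros H1 H2 H3. destruct (HVA H1 H2 H3) as [HV1 HV2].
  pose proof (S2w H1) as S2. pose proof (S3w H1) as S3. pose proof (S5w H1) as S5.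
  pose proof (M1w H1) as M1. pose proof (M2w H1) as M2.
  pose proof H3 as H3'. unfold is_wdl1, is_mnd1 in H3'.
  destruct H3' as ((_ & _ & Xm & Xu) & (_ & _ & Zm & Zu) & C).
  pose proof (LemA_E2 H1 H2 H3) as E2.
  aunf.
  mkrule constr:([snd t; snd s; snd t'; snd s'; snd v]) constr:([mut; etat; mus; etas; lam; mut'; etat'; mus'; etas'; lam'; xi; zeta]) Zm RZm.
  mkrule constr:([snd t; snd s; snd t'; snd s'; snd v]) constr:([mut; etat; mus; etas; lam; mut'; etat'; mus'; etas'; lam'; xi; zeta]) Xm RXm.
  mkrule constr:([snd t; snd s; snd t'; snd s'; snd v]) constr:([mut; etat; mus; etas; lam; mut'; etat'; mus'; etas'; lam'; xi; zeta]) S5 RS5.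
  mkrule constr:([snd t; snd s; snd t'; snd s'; snd v]) constr:([mut; etat; mus; etas; lam; mut'; etat'; mus'; etas'; lam'; xi; zeta]) S3 RS3.
  mkrule constr:([snd t; snd s; snd t'; snd s'; snd v]) constr:([mut; etat; mus; etas; lam; mut'; etat'; mus'; etas'; lam'; xi; zeta]) S2 RS2.
  mkrule constr:([snd t; snd s; snd t'; snd s'; snd v]) constr:([mut; etat; mus; etas; lam; mut'; etat'; mus'; etas'; lam'; xi; zeta]) E2 RE2.
  mkrule constr:([snd t; snd s; snd t'; snd s'; snd v]) constr:([mut; etat; mus; etas; lam; mut'; etat'; mus'; etas'; lam'; xi; zeta]) M1 RM1.
  mkrule constr:([snd t; snd s; snd t'; snd s'; snd v]) constr:([mut; etat; mus; etas; lam; mut'; etat'; mus'; etas'; lam'; xi; zeta]) M2 RM2.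
  mkrule constr:([snd t; snd s; snd t'; snd s'; snd v]) constr:([mut; etat; mus; etas; lam; mut'; etat'; mus'; etas'; lam'; xi; zeta]) C RC.
  start constr:([snd t; snd s; snd t'; snd s'; snd v]) constr:([mut; etat; mus; etas; lam; mut'; etat'; mus'; etas'; lam'; xi; zeta]).
  sw 2.
  sw 4.
  sw 1.
  sw 3.
  sw 2.
  rul RZm 1 (@nil nat) [1;0].
  sw 5.
  sw 6.
  rul RXm 5 [3;3] [1].
  sw 3.
  sw 4.
  sw 7.
  sw 2.
  sw 3.
  sw 6.
  sw 1.
  sw 2.
  sw 5.
  sw 4.
  sw 3.
  sw 2.
  rul RS5 0 [4] (@nil nat).
  rul RS3 1 [4] [0].
  sw 8.
  sw 4.
  sw 3.
  sw 2.
  sw 0.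
  rulr RC 3 [3] [0].
  sw 2.
  rulr RM2 0 [4] (@nil nat).
  sw 5.
  sw 4.
  sw 3.
  sw 6.
  sw 5.
  sw 4.
  rulr RM1 0 [4] (@nil nat).
  rulr RE2 3 (@nil nat) [1;0].
  sw 10.
  sw 9.
  sw 8.
  sw 7.
  sw 6.
  sw 5.
  sw 4.
  sw 3.
  sw 11.
  sw 10.
  sw 9.
  sw 8.
  sw 7.
  sw 6.
  sw 5.
  sw 4.
  sw 12.
  sw 11.
  sw 10.
  sw 9.
  sw 8.
  sw 7.
  sw 6.
  sw 5.
  rulr RS2 3 [4;1;0] (@nil nat).
  sw 8.
  sw 7.
  sw 6.
  sw 9.
  sw 8.
  sw 7.
  sw 10.
  sw 9.
  sw 8.
  sw 11.
  sw 10.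
  sw 9.
  sw 5.
  sw 4.
  sw 3.
  sw 12.
  sw 11.
  sw 10.
  sw 6.
  sw 5.
  sw 4.
  sw 13.
  sw 12.
  sw 11.
  sw 7.
  sw 6.
  sw 5.
  sw 14.
  sw 13.
  sw 12.
  sw 8.
  sw 7.
  sw 6.
  sw 15.
  sw 14.
  sw 13.
  sw 9.
  sw 8.
  sw 7.
  reflexivity.
Qed.

Lemma LemA_E4 (K : TwoCat) (A A' : Ob K) (t : kb1 K) (mut etat : C2 K) (s : kb1 K) (mus etas lam : C2 K) (t' : kb1 K) (mut' etat' : C2 K) (s' : kb1 K) (mus' etas' lam' : C2 K) (v : kb1 K) (xi zeta : C2 K) :
  is_wdl A t mut etat s mus etas lam -> is_wdl A' t' mut' etat' s' mus' etas' lam' -> is_wdl1 A A' t mut etat s mus etas lam t' mut' etat' s' mus' etas' lam' v xi zeta -> (wl v (lambar t s mus etas lam) ⋅ wr zeta t ⋅ wl s' xi) ⋅ wr (cmp_eta etat' etas' lam') v = wl v (cmp_eta etat etas lam).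
Proof.
  intros H1 H2 H3. destruct (HVA H1 H2 H3) as [HV1 HV2].
  pose proof (S2w H1) as S2. pose proof (S3w H1) as S3. pose proof (S5w H1) as S5.
  pose proof (M1w H1) as M1. pose proof (M2w H1) as M2.
  pose proof H3 as H3'. unfold is_wdl1, is_mnd1 in H3'.
  destruct H3' as ((_ & _ & Xm & Xu) & (_ & _ & Zm & Zu) & C).
  aunf.
  mkrule constr:([snd t; snd s; snd t'; snd s'; snd v]) constr:([mut; etat; mus; etas; lam; mut'; etat'; mus'; etas'; lam'; xi; zeta]) C RC.
  mkrule constr:([snd t; snd s; snd t'; snd s'; snd v]) constr:([mut; etat; mus; etas; lam; mut'; etat'; mus'; etas'; lam'; xi; zeta]) Zu RZu.
  mkrule constr:([snd t; snd s; snd t'; snd s'; snd v]) constr:([mut; etat; mus; etas; lam; mut'; etat'; mus'; etas'; lam'; xi; zeta]) Xu RXu.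
  start constr:([snd t; snd s; snd t'; snd s'; snd v]) constr:([mut; etat; mus; etas; lam; mut'; etat'; mus'; etas'; lam'; xi; zeta]).
  rulr RC 0 (@nil nat) (@nil nat).
  sw 3.
  rul RZu 2 [2] (@nil nat).
  sw 2.
  rul RXu 1 (@nil nat) [1].
  sw 1.
  sw 1.
  reflexivity.
Qed.

Set Implicit Arguments.
Unset Strict Implicit.

Lemma LemA (K : TwoCat) (A A' : Ob K) (t : kb1 K) (mut etat : C2 K) (s : kb1 K) (mus etas lam : C2 K) (t' : kb1 K) (mut' etat' : C2 K) (s' : kb1 K) (mus' etas' lam' : C2 K) (v : kb1 K) (xi zeta : C2 K) :
  is_wdl A t mut etat s mus etas lam -> is_wdl A' t' mut' etat' s' mus' etas' lam' ->
  is_wdl1 A A' t mut etat s mus etas lam t' mut' etat' s' mus' etas' lam' v xi zeta ->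
  is_mnd1 A A' (cmp1 t s mus etas lam) (cmp_mu t s mut mus lam) (cmp_eta etat etas lam)
    (cmp1 t' s' mus' etas' lam') (cmp_mu t' s' mut' mus' lam') (cmp_eta etat' etas' lam') v
    (wl v (lambar t s mus etas lam) ⋅ wr zeta t ⋅ wl s' xi).
Proof.
  intros H1 H2 H3.
  pose proof (LemA_E1 H1 H2 H3) as E1. pose proof (LemA_E2 H1 H2 H3) as E2.
  pose proof (LemA_E3 H1 H2 H3) as E3. pose proof (LemA_E4 H1 H2 H3) as E4.
  destruct (HVA H1 H2 H3) as [HV1 HV2].
  pose proof H3 as H3'. unfold is_wdl1, is_mnd1 in H3'. destruct H3' as ((Hv & _) & _).
  unfold is_mnd1. split; [exact Hv|]. split; [|split; [exact E3 | exact E4]].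
  unfold kcell. split; [|split; [exact E1| exact E2]].
  clear E1 E2 E3 E4.
  unfold cell2. simpl. unfold lambar, wl, wr, kcomp1. simpl.
  match goal with |- src2 ?X = _ /\ _ =>
    let tX := reif constr:([snd t; snd s; snd t'; snd s'; snd v])
                   constr:([mut; etat; mus; etas; lam; mut'; etat'; mus'; etas'; lam'; xi; zeta]) X in
    destruct (it_ty HV1 HV2 (t:=tX) ltac:(vm_compute; reflexivity)) as [Hs Ht];
    simpl in Hs, Ht; rewrite Hs, Ht end.
  clear -H1 H2 H3. unf. destr_all.
  repeat rewrite c1r by congruence.
  split; rewrite comp1A; auto; rewrite ?cod_comp1, ?dom_comp1; congruence.
Qed.

Set Implicit Arguments.
Unset Strict Implicit.

Definition SGM : Sig := MkSig 7 21 [0;0;0;1;1;1;0] [0;0;0;1;1;1;1] [[0;0];[];[1;1];[];[2;2];[];[1;0];[2;0];[2;1];[3;3];[];[4;4];[];[5;5];[];[4;3];[5;3];[5;4];[3;6];[4;6];[5;6]] [[0];[0];[1];[1];[2];[2];[0;1];[0;2];[1;2];[3];[3];[4];[4];[5];[5];[3;4];[3;5];[4;5];[6;0];[6;1];[6;2]] [0;0;0;0;0;0;0;0;0;1;1;1;1;1;1;1;1;1;0;0;0] [0;0;0;0;0;0;0;0;0;1;1;1;1;1;1;1;1;1;1;1;1].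

Lemma HVM (K : TwoCat) (A A' : Ob K)
    (s0 : kb1 K) (mu0 eta0 : C2 K) (s1 : kb1 K) (mu1 eta1 : C2 K)
    (s2 : kb1 K) (mu2 eta2 : C2 K) (l01 l02 l12 : C2 K)
    (s0' : kb1 K) (mu0' eta0' : C2 K) (s1' : kb1 K) (mu1' eta1' : C2 K)
    (s2' : kb1 K) (mu2' eta2' : C2 K) (l01' l02' l12' : C2 K)
    (v : kb1 K) (xi0 xi1 xi2 : C2 K) :
  is_wdl2 A s0 mu0 eta0 s1 mu1 eta1 s2 mu2 eta2 l01 l02 l12 -> is_wdl2 A' s0' mu0' eta0' s1' mu1' eta1' s2' mu2' eta2' l01' l02' l12' -> is_wdl2_hom A A' s0 mu0 eta0 s1 mu1 eta1 s2 mu2 eta2 l01 l02 l12 s0' mu0' eta0' s1' mu1' eta1' s2' mu2' eta2' l01' l02' l12' v xi0 xi1 xi2 ->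
  V1 K SGM (fun i => nth i [A; A'] A) (fun i => nth i [fst s0; fst s1; fst s2; fst s0'; fst s1'; fst s2'; fst v] (fst s0)) (fun i => nth i [snd s0; snd s1; snd s2; snd s0'; snd s1'; snd s2'; snd v] (snd s0)) /\ V2 K SGM (fun i => nth i [A; A'] A) (fun i => nth i [fst s0; fst s1; fst s2; fst s0'; fst s1'; fst s2'; fst v] (fst s0)) (fun i => nth i [snd s0; snd s1; snd s2; snd s0'; snd s1'; snd s2'; snd v] (snd s0)) (fun j => nth j [mu0; eta0; mu1; eta1; mu2; eta2; l01; l02; l12; mu0'; eta0'; mu1'; eta1'; mu2'; eta2'; l01'; l02'; l12'; xi0; xi1; xi2] mu0).
Proof.
  intros H1 H2 H3. unf. destr_all. split.
  - intros i Hi; simpl in Hi. do 7 (destruct i as [|i]; [simpl; repeat split; auto; congruence|]). lia.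
  - intros j Hj; simpl in Hj.
    do 21 (destruct j as [|j]; [simpl; repeat rewrite c1r by congruence; repeat rewrite h1r by congruence;
      repeat split; auto; congruence|]). lia.
Qed.

Theorem lemma2p5 (K : TwoCat) (A A' : Ob K)
    (s0 : kb1 K) (mu0 eta0 : C2 K) (s1 : kb1 K) (mu1 eta1 : C2 K)
    (s2 : kb1 K) (mu2 eta2 : C2 K) (l01 l02 l12 : C2 K)
    (s0' : kb1 K) (mu0' eta0' : C2 K) (s1' : kb1 K) (mu1' eta1' : C2 K)
    (s2' : kb1 K) (mu2' eta2' : C2 K) (l01' l02' l12' : C2 K)
    (v : kb1 K) (xi0 xi1 xi2 : C2 K) :
  is_wdl2 A s0 mu0 eta0 s1 mu1 eta1 s2 mu2 eta2 l01 l02 l12 ->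
  is_wdl2 A' s0' mu0' eta0' s1' mu1' eta1' s2' mu2' eta2' l01' l02' l12' ->
  is_wdl2_hom A A' s0 mu0 eta0 s1 mu1 eta1 s2 mu2 eta2 l01 l02 l12
    s0' mu0' eta0' s1' mu1' eta1' s2' mu2' eta2' l01' l02' l12' v xi0 xi1 xi2 ->
  let lb01 := lambar s1 s0 mu0 eta0 l01 in
  let lb12 := lambar s2 s1 mu1 eta1 l12 in
  let lb01' := lambar s1' s0' mu0' eta0' l01' in
  let lb12' := lambar s2' s1' mu1' eta1' l12' in
  (* the composite monads (s0 s1, lb01) and (s1 s2, lb12) *)
  let s01 := cmp1 s1 s0 mu0 eta0 l01 in
  let mu01 := cmp_mu s1 s0 mu1 mu0 l01 in
  let eta01 := cmp_eta eta1 eta0 l01 in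
  let s12 := cmp1 s2 s1 mu1 eta1 l12 in
  let mu12 := cmp_mu s2 s1 mu2 mu1 l12 in
  let eta12 := cmp_eta eta2 eta1 l12 in
  let s01' := cmp1 s1' s0' mu0' eta0' l01' in
  let mu01' := cmp_mu s1' s0' mu1' mu0' l01' in
  let eta01' := cmp_eta eta1' eta0' l01' in
  let s12' := cmp1 s2' s1' mu1' eta1' l12' in
  let mu12' := cmp_mu s2' s1' mu2' mu1' l12' in
  let eta12' := cmp_eta eta2' eta1' l12' in
  (* lam_{01,2} : s2 (s0 s1) -> (s0 s1) s2  and  lam_{0,12} : (s1 s2) s0 -> s0 (s1 s2) *)
  let l01_2 := wl s0 l12 ⋅ wr l02 s1 ⋅ wl s2 lb01 in
  let l0_12 := wr l01 s2 ⋅ wl s1 l02 ⋅ wr lb12 s0 in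
  let l01_2' := wl s0' l12' ⋅ wr l02' s1' ⋅ wl s2' lb01' in
  let l0_12' := wr l01' s2' ⋅ wl s1' l02' ⋅ wr lb12' s0' in
  (* xi01 and xi12 *)
  let xi01 := wl v lb01 ⋅ wr xi0 s1 ⋅ wl s0' xi1 in
  let xi12 := wl v lb12 ⋅ wr xi1 s2 ⋅ wl s1' xi2 in
  is_wdl1 A A' s2 mu2 eta2 s01 mu01 eta01 l01_2
               s2' mu2' eta2' s01' mu01' eta01' l01_2' v xi2 xi01 /\
  is_wdl1 A A' s12 mu12 eta12 s0 mu0 eta0 l0_12
               s12' mu12' eta12' s0' mu0' eta0' l0_12' v xi12 xi0.
Proof.
  intros H1 H2 H3. cbv zeta.
  destruct (HVM H1 H2 H3) as [HV1 HV2].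
  pose proof H1 as H1'. pose proof H2 as H2'. pose proof H3 as H3'.
  unfold is_wdl2 in H1', H2'. unfold is_wdl2_hom in H3'.
  destruct H1' as (Hw01 & Hw02 & Hw12 & YB).
  destruct H2' as (Hw01p & Hw02p & Hw12p & YBp).
  destruct H3' as (Hh01 & Hh02 & Hh12).
  pose proof Hw01 as X. unfold is_wdl in X. destruct X as (Mt01 & Ms01 & _ & W1_01 & W2_01 & W3_01 & W4_01).
  pose proof (S1w Hw01) as S1_01.
  pose proof (S2w Hw01) as S2_01.
  pose proof (S3w Hw01) as S3_01.
  pose proof (S4w Hw01) as S4_01.
  pose proof (S5w Hw01) as S5_01.
  pose proof (M1w Hw01) as M1_01.
  pose proof (M2w Hw01) as M2_01.
  pose proof Hw02 as X. unfold is_wdl in X. destruct X as (Mt02 & Ms02 & _ & W1_02 & W2_02 & W3_02 & W4_02).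
  pose proof (S1w Hw02) as S1_02.
  pose proof (S2w Hw02) as S2_02.
  pose proof (S3w Hw02) as S3_02.
  pose proof (S4w Hw02) as S4_02.
  pose proof (S5w Hw02) as S5_02.
  pose proof (M1w Hw02) as M1_02.
  pose proof (M2w Hw02) as M2_02.
  pose proof Hw12 as X. unfold is_wdl in X. destruct X as (Mt12 & Ms12 & _ & W1_12 & W2_12 & W3_12 & W4_12).
  pose proof (S1w Hw12) as S1_12.
  pose proof (S2w Hw12) as S2_12.
  pose proof (S3w Hw12) as S3_12.
  pose proof (S4w Hw12) as S4_12.
  pose proof (S5w Hw12) as S5_12.
  pose proof (M1w Hw12) as M1_12.
  pose proof (M2w Hw12) as M2_12.
  unfold is_monad in Ms01. destruct Ms01 as (_ & _ & _ & As0 & Ua0 & Ub0).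
  unfold is_monad in Mt01. destruct Mt01 as (_ & _ & _ & As1 & Ua1 & Ub1).
  unfold is_monad in Mt02. destruct Mt02 as (_ & _ & _ & As2 & Ua2 & Ub2).
  pose proof Hw01p as X. unfold is_wdl in X. destruct X as (Mt01p & Ms01p & _ & W1_01p & W2_01p & W3_01p & W4_01p).
  pose proof (S1w Hw01p) as S1_01p.
  pose proof (S2w Hw01p) as S2_01p.
  pose proof (S3w Hw01p) as S3_01p.
  pose proof (S4w Hw01p) as S4_01p.
  pose proof (S5w Hw01p) as S5_01p.
  pose proof (M1w Hw01p) as M1_01p.
  pose proof (M2w Hw01p) as M2_01p.
  pose proof Hw02p as X. unfold is_wdl in X. destruct X as (Mt02p & Ms02p & _ & W1_02p & W2_02p & W3_02p & W4_02p).
  pose proof (S1w Hw02p) as S1_02p.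
  pose proof (S2w Hw02p) as S2_02p.
  pose proof (S3w Hw02p) as S3_02p.
  pose proof (S4w Hw02p) as S4_02p.
  pose proof (S5w Hw02p) as S5_02p.
  pose proof (M1w Hw02p) as M1_02p.
  pose proof (M2w Hw02p) as M2_02p.
  pose proof Hw12p as X. unfold is_wdl in X. destruct X as (Mt12p & Ms12p & _ & W1_12p & W2_12p & W3_12p & W4_12p).
  pose proof (S1w Hw12p) as S1_12p.
  pose proof (S2w Hw12p) as S2_12p.
  pose proof (S3w Hw12p) as S3_12p.
  pose proof (S4w Hw12p) as S4_12p.
  pose proof (S5w Hw12p) as S5_12p.
  pose proof (M1w Hw12p) as M1_12p.
  pose proof (M2w Hw12p) as M2_12p.
  unfold is_monad in Ms01p. destruct Ms01p as (_ & _ & _ & As0p & Ua0p & Ub0p).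
  unfold is_monad in Mt01p. destruct Mt01p as (_ & _ & _ & As1p & Ua1p & Ub1p).
  unfold is_monad in Mt02p. destruct Mt02p as (_ & _ & _ & As2p & Ua2p & Ub2p).
  pose proof (LemA_E2 Hw01 Hw01p Hh01) as K01. pose proof (LemA_E2 Hw12 Hw12p Hh12) as K12.
  pose proof Hh01 as X. unfold is_wdl1, is_mnd1 in X. destruct X as ((_ & _ & Xm1 & Xu1) & (_ & _ & Xm0 & Xu0) & C01).
  pose proof Hh02 as X. unfold is_wdl1, is_mnd1 in X. destruct X as ((_ & _ & Xm2 & Xu2) & _ & C02).
  pose proof Hh12 as X. unfold is_wdl1, is_mnd1 in X. destruct X as (_ & _ & C12).
  unfold cmp1, cmp_mu, cmp_eta, lambar, wl, wr, kcomp1 in As0, As2, As2p, C01, C02, C12, K01, K12, M1_01, S1_01, S1_12, S1_12p, S2_01, S2_12, S2_12p, S3_02, S3_02p, S4_02, S4_02p, S4_12, S4_12p, S5_12, S5_12p, Ua2, Ua2p, Ub0, W1_01, W1_02, W1_02p, W2_02, W2_02p, W3_02, W3_02p, W4_02, W4_02p, Xm0, Xu0, YB, YBp. simpl in As0, As2, As2p, C01, C02, C12, K01, K12, M1_01, S1_01, S1_12, S1_12p, S2_01, S2_12, S2_12p, S3_02, S3_02p, S4_02, S4_02p, S4_12, S4_12p, S5_12, S5_12p, Ua2, Ua2p, Ub0, W1_01, W1_02, W1_02p, W2_02, W2_02p, W3_02, W3_02p, W4_02, W4_02p, Xm0, Xu0, YB, YBp.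
  mkrule constr:([snd s0; snd s1; snd s2; snd s0'; snd s1'; snd s2'; snd v]) constr:([mu0; eta0; mu1; eta1; mu2; eta2; l01; l02; l12; mu0'; eta0'; mu1'; eta1'; mu2'; eta2'; l01'; l02'; l12'; xi0; xi1; xi2]) As0 RAs0.
  mkrule constr:([snd s0; snd s1; snd s2; snd s0'; snd s1'; snd s2'; snd v]) constr:([mu0; eta0; mu1; eta1; mu2; eta2; l01; l02; l12; mu0'; eta0'; mu1'; eta1'; mu2'; eta2'; l01'; l02'; l12'; xi0; xi1; xi2]) As2 RAs2.
  mkrule constr:([snd s0; snd s1; snd s2; snd s0'; snd s1'; snd s2'; snd v]) constr:([mu0; eta0; mu1; eta1; mu2; eta2; l01; l02; l12; mu0'; eta0'; mu1'; eta1'; mu2'; eta2'; l01'; l02'; l12'; xi0; xi1; xi2]) As2p RAs2p.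
  mkrule constr:([snd s0; snd s1; snd s2; snd s0'; snd s1'; snd s2'; snd v]) constr:([mu0; eta0; mu1; eta1; mu2; eta2; l01; l02; l12; mu0'; eta0'; mu1'; eta1'; mu2'; eta2'; l01'; l02'; l12'; xi0; xi1; xi2]) C01 RC01.
  mkrule constr:([snd s0; snd s1; snd s2; snd s0'; snd s1'; snd s2'; snd v]) constr:([mu0; eta0; mu1; eta1; mu2; eta2; l01; l02; l12; mu0'; eta0'; mu1'; eta1'; mu2'; eta2'; l01'; l02'; l12'; xi0; xi1; xi2]) C02 RC02.
  mkrule constr:([snd s0; snd s1; snd s2; snd s0'; snd s1'; snd s2'; snd v]) constr:([mu0; eta0; mu1; eta1; mu2; eta2; l01; l02; l12; mu0'; eta0'; mu1'; eta1'; mu2'; eta2'; l01'; l02'; l12'; xi0; xi1; xi2]) C12 RC12.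
  mkrule constr:([snd s0; snd s1; snd s2; snd s0'; snd s1'; snd s2'; snd v]) constr:([mu0; eta0; mu1; eta1; mu2; eta2; l01; l02; l12; mu0'; eta0'; mu1'; eta1'; mu2'; eta2'; l01'; l02'; l12'; xi0; xi1; xi2]) K01 RK01.
  mkrule constr:([snd s0; snd s1; snd s2; snd s0'; snd s1'; snd s2'; snd v]) constr:([mu0; eta0; mu1; eta1; mu2; eta2; l01; l02; l12; mu0'; eta0'; mu1'; eta1'; mu2'; eta2'; l01'; l02'; l12'; xi0; xi1; xi2]) K12 RK12.
  mkrule constr:([snd s0; snd s1; snd s2; snd s0'; snd s1'; snd s2'; snd v]) constr:([mu0; eta0; mu1; eta1; mu2; eta2; l01; l02; l12; mu0'; eta0'; mu1'; eta1'; mu2'; eta2'; l01'; l02'; l12'; xi0; xi1; xi2]) M1_01 RM1_01.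
  mkrule constr:([snd s0; snd s1; snd s2; snd s0'; snd s1'; snd s2'; snd v]) constr:([mu0; eta0; mu1; eta1; mu2; eta2; l01; l02; l12; mu0'; eta0'; mu1'; eta1'; mu2'; eta2'; l01'; l02'; l12'; xi0; xi1; xi2]) S1_01 RS1_01.
  mkrule constr:([snd s0; snd s1; snd s2; snd s0'; snd s1'; snd s2'; snd v]) constr:([mu0; eta0; mu1; eta1; mu2; eta2; l01; l02; l12; mu0'; eta0'; mu1'; eta1'; mu2'; eta2'; l01'; l02'; l12'; xi0; xi1; xi2]) S1_12 RS1_12.
  mkrule constr:([snd s0; snd s1; snd s2; snd s0'; snd s1'; snd s2'; snd v]) constr:([mu0; eta0; mu1; eta1; mu2; eta2; l01; l02; l12; mu0'; eta0'; mu1'; eta1'; mu2'; eta2'; l01'; l02'; l12'; xi0; xi1; xi2]) S1_12p RS1_12p.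
  mkrule constr:([snd s0; snd s1; snd s2; snd s0'; snd s1'; snd s2'; snd v]) constr:([mu0; eta0; mu1; eta1; mu2; eta2; l01; l02; l12; mu0'; eta0'; mu1'; eta1'; mu2'; eta2'; l01'; l02'; l12'; xi0; xi1; xi2]) S2_01 RS2_01.
  mkrule constr:([snd s0; snd s1; snd s2; snd s0'; snd s1'; snd s2'; snd v]) constr:([mu0; eta0; mu1; eta1; mu2; eta2; l01; l02; l12; mu0'; eta0'; mu1'; eta1'; mu2'; eta2'; l01'; l02'; l12'; xi0; xi1; xi2]) S2_12 RS2_12.
  mkrule constr:([snd s0; snd s1; snd s2; snd s0'; snd s1'; snd s2'; snd v]) constr:([mu0; eta0; mu1; eta1; mu2; eta2; l01; l02; l12; mu0'; eta0'; mu1'; eta1'; mu2'; eta2'; l01'; l02'; l12'; xi0; xi1; xi2]) S2_12p RS2_12p.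
  mkrule constr:([snd s0; snd s1; snd s2; snd s0'; snd s1'; snd s2'; snd v]) constr:([mu0; eta0; mu1; eta1; mu2; eta2; l01; l02; l12; mu0'; eta0'; mu1'; eta1'; mu2'; eta2'; l01'; l02'; l12'; xi0; xi1; xi2]) S3_02 RS3_02.
  mkrule constr:([snd s0; snd s1; snd s2; snd s0'; snd s1'; snd s2'; snd v]) constr:([mu0; eta0; mu1; eta1; mu2; eta2; l01; l02; l12; mu0'; eta0'; mu1'; eta1'; mu2'; eta2'; l01'; l02'; l12'; xi0; xi1; xi2]) S3_02p RS3_02p.
  mkrule constr:([snd s0; snd s1; snd s2; snd s0'; snd s1'; snd s2'; snd v]) constr:([mu0; eta0; mu1; eta1; mu2; eta2; l01; l02; l12; mu0'; eta0'; mu1'; eta1'; mu2'; eta2'; l01'; l02'; l12'; xi0; xi1; xi2]) S4_02 RS4_02.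
  mkrule constr:([snd s0; snd s1; snd s2; snd s0'; snd s1'; snd s2'; snd v]) constr:([mu0; eta0; mu1; eta1; mu2; eta2; l01; l02; l12; mu0'; eta0'; mu1'; eta1'; mu2'; eta2'; l01'; l02'; l12'; xi0; xi1; xi2]) S4_02p RS4_02p.
  mkrule constr:([snd s0; snd s1; snd s2; snd s0'; snd s1'; snd s2'; snd v]) constr:([mu0; eta0; mu1; eta1; mu2; eta2; l01; l02; l12; mu0'; eta0'; mu1'; eta1'; mu2'; eta2'; l01'; l02'; l12'; xi0; xi1; xi2]) S4_12 RS4_12.
  mkrule constr:([snd s0; snd s1; snd s2; snd s0'; snd s1'; snd s2'; snd v]) constr:([mu0; eta0; mu1; eta1; mu2; eta2; l01; l02; l12; mu0'; eta0'; mu1'; eta1'; mu2'; eta2'; l01'; l02'; l12'; xi0; xi1; xi2]) S4_12p RS4_12p.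
  mkrule constr:([snd s0; snd s1; snd s2; snd s0'; snd s1'; snd s2'; snd v]) constr:([mu0; eta0; mu1; eta1; mu2; eta2; l01; l02; l12; mu0'; eta0'; mu1'; eta1'; mu2'; eta2'; l01'; l02'; l12'; xi0; xi1; xi2]) S5_12 RS5_12.
  mkrule constr:([snd s0; snd s1; snd s2; snd s0'; snd s1'; snd s2'; snd v]) constr:([mu0; eta0; mu1; eta1; mu2; eta2; l01; l02; l12; mu0'; eta0'; mu1'; eta1'; mu2'; eta2'; l01'; l02'; l12'; xi0; xi1; xi2]) S5_12p RS5_12p.
  mkrule constr:([snd s0; snd s1; snd s2; snd s0'; snd s1'; snd s2'; snd v]) constr:([mu0; eta0; mu1; eta1; mu2; eta2; l01; l02; l12; mu0'; eta0'; mu1'; eta1'; mu2'; eta2'; l01'; l02'; l12'; xi0; xi1; xi2]) Ua2 RUa2.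
  mkrule constr:([snd s0; snd s1; snd s2; snd s0'; snd s1'; snd s2'; snd v]) constr:([mu0; eta0; mu1; eta1; mu2; eta2; l01; l02; l12; mu0'; eta0'; mu1'; eta1'; mu2'; eta2'; l01'; l02'; l12'; xi0; xi1; xi2]) Ua2p RUa2p.
  mkrule constr:([snd s0; snd s1; snd s2; snd s0'; snd s1'; snd s2'; snd v]) constr:([mu0; eta0; mu1; eta1; mu2; eta2; l01; l02; l12; mu0'; eta0'; mu1'; eta1'; mu2'; eta2'; l01'; l02'; l12'; xi0; xi1; xi2]) Ub0 RUb0.
  mkrule constr:([snd s0; snd s1; snd s2; snd s0'; snd s1'; snd s2'; snd v]) constr:([mu0; eta0; mu1; eta1; mu2; eta2; l01; l02; l12; mu0'; eta0'; mu1'; eta1'; mu2'; eta2'; l01'; l02'; l12'; xi0; xi1; xi2]) W1_01 RW1_01.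
  mkrule constr:([snd s0; snd s1; snd s2; snd s0'; snd s1'; snd s2'; snd v]) constr:([mu0; eta0; mu1; eta1; mu2; eta2; l01; l02; l12; mu0'; eta0'; mu1'; eta1'; mu2'; eta2'; l01'; l02'; l12'; xi0; xi1; xi2]) W1_02 RW1_02.
  mkrule constr:([snd s0; snd s1; snd s2; snd s0'; snd s1'; snd s2'; snd v]) constr:([mu0; eta0; mu1; eta1; mu2; eta2; l01; l02; l12; mu0'; eta0'; mu1'; eta1'; mu2'; eta2'; l01'; l02'; l12'; xi0; xi1; xi2]) W1_02p RW1_02p.
  mkrule constr:([snd s0; snd s1; snd s2; snd s0'; snd s1'; snd s2'; snd v]) constr:([mu0; eta0; mu1; eta1; mu2; eta2; l01; l02; l12; mu0'; eta0'; mu1'; eta1'; mu2'; eta2'; l01'; l02'; l12'; xi0; xi1; xi2]) W2_02 RW2_02.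
  mkrule constr:([snd s0; snd s1; snd s2; snd s0'; snd s1'; snd s2'; snd v]) constr:([mu0; eta0; mu1; eta1; mu2; eta2; l01; l02; l12; mu0'; eta0'; mu1'; eta1'; mu2'; eta2'; l01'; l02'; l12'; xi0; xi1; xi2]) W2_02p RW2_02p.
  mkrule constr:([snd s0; snd s1; snd s2; snd s0'; snd s1'; snd s2'; snd v]) constr:([mu0; eta0; mu1; eta1; mu2; eta2; l01; l02; l12; mu0'; eta0'; mu1'; eta1'; mu2'; eta2'; l01'; l02'; l12'; xi0; xi1; xi2]) W3_02 RW3_02.
  mkrule constr:([snd s0; snd s1; snd s2; snd s0'; snd s1'; snd s2'; snd v]) constr:([mu0; eta0; mu1; eta1; mu2; eta2; l01; l02; l12; mu0'; eta0'; mu1'; eta1'; mu2'; eta2'; l01'; l02'; l12'; xi0; xi1; xi2]) W3_02p RW3_02p.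
  mkrule constr:([snd s0; snd s1; snd s2; snd s0'; snd s1'; snd s2'; snd v]) constr:([mu0; eta0; mu1; eta1; mu2; eta2; l01; l02; l12; mu0'; eta0'; mu1'; eta1'; mu2'; eta2'; l01'; l02'; l12'; xi0; xi1; xi2]) W4_02 RW4_02.
  mkrule constr:([snd s0; snd s1; snd s2; snd s0'; snd s1'; snd s2'; snd v]) constr:([mu0; eta0; mu1; eta1; mu2; eta2; l01; l02; l12; mu0'; eta0'; mu1'; eta1'; mu2'; eta2'; l01'; l02'; l12'; xi0; xi1; xi2]) W4_02p RW4_02p.
  mkrule constr:([snd s0; snd s1; snd s2; snd s0'; snd s1'; snd s2'; snd v]) constr:([mu0; eta0; mu1; eta1; mu2; eta2; l01; l02; l12; mu0'; eta0'; mu1'; eta1'; mu2'; eta2'; l01'; l02'; l12'; xi0; xi1; xi2]) Xm0 RXm0.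
  mkrule constr:([snd s0; snd s1; snd s2; snd s0'; snd s1'; snd s2'; snd v]) constr:([mu0; eta0; mu1; eta1; mu2; eta2; l01; l02; l12; mu0'; eta0'; mu1'; eta1'; mu2'; eta2'; l01'; l02'; l12'; xi0; xi1; xi2]) Xu0 RXu0.
  mkrule constr:([snd s0; snd s1; snd s2; snd s0'; snd s1'; snd s2'; snd v]) constr:([mu0; eta0; mu1; eta1; mu2; eta2; l01; l02; l12; mu0'; eta0'; mu1'; eta1'; mu2'; eta2'; l01'; l02'; l12'; xi0; xi1; xi2]) YB RYB.
  mkrule constr:([snd s0; snd s1; snd s2; snd s0'; snd s1'; snd s2'; snd v]) constr:([mu0; eta0; mu1; eta1; mu2; eta2; l01; l02; l12; mu0'; eta0'; mu1'; eta1'; mu2'; eta2'; l01'; l02'; l12'; xi0; xi1; xi2]) YBp RYBp.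
  assert (FL1 : (((hcomp (snd s0) l12) ⋅ (hcomp l02 (snd s1))) ⋅ (hcomp (snd s2) (((hcomp mu0 (snd s1)) ⋅ (hcomp (snd s0) l01)) ⋅ (hcomp (hcomp (snd s0) (snd s1)) eta0)))) = ((((((hcomp mu0 (hcomp (snd s1) (snd s2))) ⋅ (hcomp (snd s0) (hcomp l01 (snd s2)))) ⋅ (hcomp (snd s0) (hcomp (snd s1) l02))) ⋅ (hcomp (hcomp (snd s0) (hcomp (snd s1) (snd s2))) eta0)) ⋅ (hcomp (snd s0) l12)) ⋅ (hcomp l02 (snd s1)))).
  { start constr:([snd s0; snd s1; snd s2; snd s0'; snd s1'; snd s2'; snd v]) constr:([mu0; eta0; mu1; eta1; mu2; eta2; l01; l02; l12; mu0'; eta0'; mu1'; eta1'; mu2'; eta2'; l01'; l02'; l12'; xi0; xi1; xi2]).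
    rul RW2_02 1 (@nil nat) [1].
    sw 0.
    sw 3.
    rulr RYB 1 [0] (@nil nat).
    sw 4.
    sw 3.
    reflexivity. }
  mkrule constr:([snd s0; snd s1; snd s2; snd s0'; snd s1'; snd s2'; snd v]) constr:([mu0; eta0; mu1; eta1; mu2; eta2; l01; l02; l12; mu0'; eta0'; mu1'; eta1'; mu2'; eta2'; l01'; l02'; l12'; xi0; xi1; xi2]) FL1 RFL1.
  assert (FL2 : (((hcomp l01 (snd s2)) ⋅ (hcomp (snd s1) l02)) ⋅ (hcomp (((hcomp mu1 (snd s2)) ⋅ (hcomp (snd s1) l12)) ⋅ (hcomp (hcomp (snd s1) (snd s2)) eta1)) (snd s0))) = ((((((hcomp (hcomp (snd s0) (snd s1)) mu2) ⋅ (hcomp (snd s0) (hcomp l12 (snd s2)))) ⋅ (hcomp l02 (hcomp (snd s1) (snd s2)))) ⋅ (hcomp eta2 (hcomp (snd s0) (hcomp (snd s1) (snd s2))))) ⋅ (hcomp l01 (snd s2))) ⋅ (hcomp (snd s1) l02))).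
  { start constr:([snd s0; snd s1; snd s2; snd s0'; snd s1'; snd s2'; snd v]) constr:([mu0; eta0; mu1; eta1; mu2; eta2; l01; l02; l12; mu0'; eta0'; mu1'; eta1'; mu2'; eta2'; l01'; l02'; l12'; xi0; xi1; xi2]).
    rul RS4_12 2 (@nil nat) [0].
    rul RW1_02 1 [1] (@nil nat).
    sw 0.
    sw 3.
    rul RYB 1 (@nil nat) [2].
    sw 4.
    sw 3.
    reflexivity. }
  mkrule constr:([snd s0; snd s1; snd s2; snd s0'; snd s1'; snd s2'; snd v]) constr:([mu0; eta0; mu1; eta1; mu2; eta2; l01; l02; l12; mu0'; eta0'; mu1'; eta1'; mu2'; eta2'; l01'; l02'; l12'; xi0; xi1; xi2]) FL2 RFL2.
  assert (F1p : ((((((hcomp (hcomp (snd s0) (snd s1)) mu2) ⋅ (hcomp (snd s0) (hcomp l12 (snd s2)))) ⋅ (hcomp l02 (hcomp (snd s1) (snd s2)))) ⋅ (hcomp eta2 (hcomp (snd s0) (hcomp (snd s1) (snd s2))))) ⋅ (hcomp l01 (snd s2))) ⋅ (hcomp (snd s1) (((hcomp mu0 (snd s2)) ⋅ (hcomp (snd s0) l02)) ⋅ (hcomp (hcomp (snd s0) (snd s2)) eta0)))) = (((((hcomp (hcomp (snd s0) (snd s1)) mu2) ⋅ (hcomp (snd s0) (hcomp l12 (snd s2)))) ⋅ (hcomp l02 (hcomp (snd s1) (snd s2)))) ⋅ (hcomp eta2 (hcomp (snd s0) (hcomp (snd s1) (snd s2))))) ⋅ (hcomp l01 (snd s2)))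).
  { start constr:([snd s0; snd s1; snd s2; snd s0'; snd s1'; snd s2'; snd v]) constr:([mu0; eta0; mu1; eta1; mu2; eta2; l01; l02; l12; mu0'; eta0'; mu1'; eta1'; mu2'; eta2'; l01'; l02'; l12'; xi0; xi1; xi2]).
    sw 3.
    sw 4.
    sw 5.
    sw 6.
    rul RS4_02 4 [2;1] (@nil nat).
    sw 3.
    sw 2.
    sw 1.
    rul RAs2 0 [0;1] (@nil nat).
    sw 6.
    sw 5.
    sw 4.
    rulr RFL2 1 (@nil nat) [2].
    rul RS4_12 3 (@nil nat) [0;2].
    sw 5.
    sw 4.
    rul RUa2 3 [1] [0;2].
    rul RYB 1 (@nil nat) [2].
    sw 3.
    reflexivity. }
  mkrule constr:([snd s0; snd s1; snd s2; snd s0'; snd s1'; snd s2'; snd v]) constr:([mu0; eta0; mu1; eta1; mu2; eta2; l01; l02; l12; mu0'; eta0'; mu1'; eta1'; mu2'; eta2'; l01'; l02'; l12'; xi0; xi1; xi2]) F1p RF1p.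
  assert (TT : (((((hcomp mu0 (hcomp (snd s1) (snd s2))) ⋅ (hcomp (snd s0) (hcomp l01 (snd s2)))) ⋅ (hcomp (snd s0) (hcomp (snd s1) l02))) ⋅ (hcomp (hcomp (snd s0) (hcomp (snd s1) (snd s2))) eta0)) ⋅ (hcomp (snd s0) (((hcomp mu1 (snd s2)) ⋅ (hcomp (snd s1) l12)) ⋅ (hcomp (hcomp (snd s1) (snd s2)) eta1)))) = (((((hcomp (hcomp (snd s0) (snd s1)) mu2) ⋅ (hcomp (snd s0) (hcomp l12 (snd s2)))) ⋅ (hcomp l02 (hcomp (snd s1) (snd s2)))) ⋅ (hcomp eta2 (hcomp (snd s0) (hcomp (snd s1) (snd s2))))) ⋅ (hcomp (((hcomp mu0 (snd s1)) ⋅ (hcomp (snd s0) l01)) ⋅ (hcomp (hcomp (snd s0) (snd s1)) eta0)) (snd s2)))).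
  { start constr:([snd s0; snd s1; snd s2; snd s0'; snd s1'; snd s2'; snd v]) constr:([mu0; eta0; mu1; eta1; mu2; eta2; l01; l02; l12; mu0'; eta0'; mu1'; eta1'; mu2'; eta2'; l01'; l02'; l12'; xi0; xi1; xi2]).
    sw 3.
    sw 4.
    sw 5.
    rul RFL2 1 [0] (@nil nat).
    sw 4.
    sw 5.
    sw 6.
    rul RW4_02 5 [0;2;1] (@nil nat).
    rulr RS4_02 5 [0;2;1] (@nil nat).
    sw 8.
    sw 7.
    sw 6.
    sw 5.
    sw 4.
    rul RF1p 1 [0] (@nil nat).
    rul RW3_02 3 [0] [1;2].
    sw 0.
    sw 1.
    rulr RS3_02 2 (@nil nat) [1;2].
    sw 5.
    rulr RW3_02 2 (@nil nat) [1;2].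
    sw 3.
    sw 4.
    sw 5.
    sw 5.
    sw 4.
    sw 3.
    reflexivity. }
  mkrule constr:([snd s0; snd s1; snd s2; snd s0'; snd s1'; snd s2'; snd v]) constr:([mu0; eta0; mu1; eta1; mu2; eta2; l01; l02; l12; mu0'; eta0'; mu1'; eta1'; mu2'; eta2'; l01'; l02'; l12'; xi0; xi1; xi2]) TT RTT.
  assert (LB2 : (((hcomp mu0 (((hcomp mu1 (snd s2)) ⋅ (hcomp (snd s1) l12)) ⋅ (hcomp (hcomp (snd s1) (snd s2)) eta1))) ⋅ (hcomp (snd s0) (((hcomp l01 (snd s2)) ⋅ (hcomp (snd s1) l02)) ⋅ (hcomp (((hcomp mu1 (snd s2)) ⋅ (hcomp (snd s1) l12)) ⋅ (hcomp (hcomp (snd s1) (snd s2)) eta1)) (snd s0))))) ⋅ (hcomp (hcomp (snd s0) (((hcomp mu1 (snd s2)) ⋅ (hcomp (snd s1) l12)) ⋅ (hcomp (hcomp (snd s1) (snd s2)) eta1))) eta0)) = (((((hcomp mu0 (hcomp (snd s1) (snd s2))) ⋅ (hcomp (snd s0) (hcomp l01 (snd s2)))) ⋅ (hcomp (snd s0) (hcomp (snd s1) l02))) ⋅ (hcomp (hcomp (snd s0) (hcomp (snd s1) (snd s2))) eta0)) ⋅ (hcomp (snd s0) (((hcomp mu1 (snd s2)) ⋅ (hcomp (snd s1) l12)) ⋅ (hcomp (hcomp (snd s1) (snd s2)) eta1))))).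
  { start constr:([snd s0; snd s1; snd s2; snd s0'; snd s1'; snd s2'; snd v]) constr:([mu0; eta0; mu1; eta1; mu2; eta2; l01; l02; l12; mu0'; eta0'; mu1'; eta1'; mu2'; eta2'; l01'; l02'; l12'; xi0; xi1; xi2]).
    sw 3.
    sw 4.
    sw 5.
    sw 6.
    sw 7.
    sw 8.
    sw 9.
    sw 10.
    rul RS2_12 5 [0] [0;1].
    sw 0.
    sw 1.
    sw 8.
    sw 7.
    sw 6.
    sw 5.
    rul RTT 2 (@nil nat) [1].
    sw 8.
    sw 7.
    sw 6.
    sw 5.
    sw 4.
    sw 3.
    sw 2.
    rul RS5_12 0 [0] (@nil nat).
    rul RS1_12 1 [0] [2].
    rulr RTT 0 (@nil nat) (@nil nat).
    reflexivity. }
  mkrule constr:([snd s0; snd s1; snd s2; snd s0'; snd s1'; snd s2'; snd v]) constr:([mu0; eta0; mu1; eta1; mu2; eta2; l01; l02; l12; mu0'; eta0'; mu1'; eta1'; mu2'; eta2'; l01'; l02'; l12'; xi0; xi1; xi2]) LB2 RLB2.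
  assert (FL1p : (((hcomp (snd s0') l12') ⋅ (hcomp l02' (snd s1'))) ⋅ (hcomp (snd s2') (((hcomp mu0' (snd s1')) ⋅ (hcomp (snd s0') l01')) ⋅ (hcomp (hcomp (snd s0') (snd s1')) eta0')))) = ((((((hcomp mu0' (hcomp (snd s1') (snd s2'))) ⋅ (hcomp (snd s0') (hcomp l01' (snd s2')))) ⋅ (hcomp (snd s0') (hcomp (snd s1') l02'))) ⋅ (hcomp (hcomp (snd s0') (hcomp (snd s1') (snd s2'))) eta0')) ⋅ (hcomp (snd s0') l12')) ⋅ (hcomp l02' (snd s1')))).
  { start constr:([snd s0; snd s1; snd s2; snd s0'; snd s1'; snd s2'; snd v]) constr:([mu0; eta0; mu1; eta1; mu2; eta2; l01; l02; l12; mu0'; eta0'; mu1'; eta1'; mu2'; eta2'; l01'; l02'; l12'; xi0; xi1; xi2]).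
    rul RW2_02p 1 (@nil nat) [4].
    sw 0.
    sw 3.
    rulr RYBp 1 [3] (@nil nat).
    sw 4.
    sw 3.
    reflexivity. }
  mkrule constr:([snd s0; snd s1; snd s2; snd s0'; snd s1'; snd s2'; snd v]) constr:([mu0; eta0; mu1; eta1; mu2; eta2; l01; l02; l12; mu0'; eta0'; mu1'; eta1'; mu2'; eta2'; l01'; l02'; l12'; xi0; xi1; xi2]) FL1p RFL1p.
  assert (FL2p : (((hcomp l01' (snd s2')) ⋅ (hcomp (snd s1') l02')) ⋅ (hcomp (((hcomp mu1' (snd s2')) ⋅ (hcomp (snd s1') l12')) ⋅ (hcomp (hcomp (snd s1') (snd s2')) eta1')) (snd s0'))) = ((((((hcomp (hcomp (snd s0') (snd s1')) mu2') ⋅ (hcomp (snd s0') (hcomp l12' (snd s2')))) ⋅ (hcomp l02' (hcomp (snd s1') (snd s2')))) ⋅ (hcomp eta2' (hcomp (snd s0') (hcomp (snd s1') (snd s2'))))) ⋅ (hcomp l01' (snd s2'))) ⋅ (hcomp (snd s1') l02'))).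
  { start constr:([snd s0; snd s1; snd s2; snd s0'; snd s1'; snd s2'; snd v]) constr:([mu0; eta0; mu1; eta1; mu2; eta2; l01; l02; l12; mu0'; eta0'; mu1'; eta1'; mu2'; eta2'; l01'; l02'; l12'; xi0; xi1; xi2]).
    rul RS4_12p 2 (@nil nat) [3].
    rul RW1_02p 1 [4] (@nil nat).
    sw 0.
    sw 3.
    rul RYBp 1 (@nil nat) [5].
    sw 4.
    sw 3.
    reflexivity. }
  mkrule constr:([snd s0; snd s1; snd s2; snd s0'; snd s1'; snd s2'; snd v]) constr:([mu0; eta0; mu1; eta1; mu2; eta2; l01; l02; l12; mu0'; eta0'; mu1'; eta1'; mu2'; eta2'; l01'; l02'; l12'; xi0; xi1; xi2]) FL2p RFL2p.
  assert (F1pp : ((((((hcomp (hcomp (snd s0') (snd s1')) mu2') ⋅ (hcomp (snd s0') (hcomp l12' (snd s2')))) ⋅ (hcomp l02' (hcomp (snd s1') (snd s2')))) ⋅ (hcomp eta2' (hcomp (snd s0') (hcomp (snd s1') (snd s2'))))) ⋅ (hcomp l01' (snd s2'))) ⋅ (hcomp (snd s1') (((hcomp mu0' (snd s2')) ⋅ (hcomp (snd s0') l02')) ⋅ (hcomp (hcomp (snd s0') (snd s2')) eta0')))) = (((((hcomp (hcomp (snd s0') (snd s1')) mu2') ⋅ (hcomp (snd s0') (hcomp l12' (snd s2')))) ⋅ (hcomp l02' (hcomp (snd s1') (snd s2')))) ⋅ (hcomp eta2' (hcomp (snd s0') (hcomp (snd s1') (snd s2'))))) ⋅ (hcomp l01'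 (snd s2')))).
  { start constr:([snd s0; snd s1; snd s2; snd s0'; snd s1'; snd s2'; snd v]) constr:([mu0; eta0; mu1; eta1; mu2; eta2; l01; l02; l12; mu0'; eta0'; mu1'; eta1'; mu2'; eta2'; l01'; l02'; l12'; xi0; xi1; xi2]).
    sw 3.
    sw 4.
    sw 5.
    sw 6.
    rul RS4_02p 4 [5;4] (@nil nat).
    sw 3.
    sw 2.
    sw 1.
    rul RAs2p 0 [3;4] (@nil nat).
    sw 6.
    sw 5.
    sw 4.
    rulr RFL2p 1 (@nil nat) [5].
    rul RS4_12p 3 (@nil nat) [3;5].
    sw 5.
    sw 4.
    rul RUa2p 3 [4] [3;5].
    rul RYBp 1 (@nil nat) [5].
    sw 3.
    reflexivity. }
  mkrule constr:([snd s0; snd s1; snd s2; snd s0'; snd s1'; snd s2'; snd v]) constr:([mu0; eta0; mu1; eta1; mu2; eta2; l01; l02; l12; mu0'; eta0'; mu1'; eta1'; mu2'; eta2'; l01'; l02'; l12'; xi0; xi1; xi2]) F1pp RF1pp.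
  assert (TTp : (((((hcomp mu0' (hcomp (snd s1') (snd s2'))) ⋅ (hcomp (snd s0') (hcomp l01' (snd s2')))) ⋅ (hcomp (snd s0') (hcomp (snd s1') l02'))) ⋅ (hcomp (hcomp (snd s0') (hcomp (snd s1') (snd s2'))) eta0')) ⋅ (hcomp (snd s0') (((hcomp mu1' (snd s2')) ⋅ (hcomp (snd s1') l12')) ⋅ (hcomp (hcomp (snd s1') (snd s2')) eta1')))) = (((((hcomp (hcomp (snd s0') (snd s1')) mu2') ⋅ (hcomp (snd s0') (hcomp l12' (snd s2')))) ⋅ (hcomp l02' (hcomp (snd s1') (snd s2')))) ⋅ (hcomp eta2' (hcomp (snd s0') (hcomp (snd s1') (snd s2'))))) ⋅ (hcomp (((hcomp mu0' (snd s1')) ⋅ (hcomp (snd s0') l01')) ⋅ (hcomp (hcomp (snd s0') (snd s1')) eta0')) (snd s2')))).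
  { start constr:([snd s0; snd s1; snd s2; snd s0'; snd s1'; snd s2'; snd v]) constr:([mu0; eta0; mu1; eta1; mu2; eta2; l01; l02; l12; mu0'; eta0'; mu1'; eta1'; mu2'; eta2'; l01'; l02'; l12'; xi0; xi1; xi2]).
    sw 3.
    sw 4.
    sw 5.
    rul RFL2p 1 [3] (@nil nat).
    sw 4.
    sw 5.
    sw 6.
    rul RW4_02p 5 [3;5;4] (@nil nat).
    rulr RS4_02p 5 [3;5;4] (@nil nat).
    sw 8.
    sw 7.
    sw 6.
    sw 5.
    sw 4.
    rul RF1pp 1 [3] (@nil nat).
    rul RW3_02p 3 [3] [4;5].
    sw 0.
    sw 1.
    rulr RS3_02p 2 (@nil nat) [4;5].
    sw 5.
    rulr RW3_02p 2 (@nil nat) [4;5].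
    sw 3.
    sw 4.
    sw 5.
    sw 5.
    sw 4.
    sw 3.
    reflexivity. }
  mkrule constr:([snd s0; snd s1; snd s2; snd s0'; snd s1'; snd s2'; snd v]) constr:([mu0; eta0; mu1; eta1; mu2; eta2; l01; l02; l12; mu0'; eta0'; mu1'; eta1'; mu2'; eta2'; l01'; l02'; l12'; xi0; xi1; xi2]) TTp RTTp.
  assert (LB2p : (((hcomp mu0' (((hcomp mu1' (snd s2')) ⋅ (hcomp (snd s1') l12')) ⋅ (hcomp (hcomp (snd s1') (snd s2')) eta1'))) ⋅ (hcomp (snd s0') (((hcomp l01' (snd s2')) ⋅ (hcomp (snd s1') l02')) ⋅ (hcomp (((hcomp mu1' (snd s2')) ⋅ (hcomp (snd s1') l12')) ⋅ (hcomp (hcomp (snd s1') (snd s2')) eta1')) (snd s0'))))) ⋅ (hcomp (hcomp (snd s0') (((hcomp mu1' (snd s2')) ⋅ (hcomp (snd s1') l12')) ⋅ (hcomp (hcomp (snd s1') (snd s2')) eta1'))) eta0')) = (((((hcomp mu0' (hcomp (snd s1') (snd s2'))) ⋅ (hcomp (snd s0') (hcomp l01' (snd s2')))) ⋅ (hcomp (snd s0') (hcomp (snd s1') l02'))) ⋅ (hcomp (hcomp (snd s0') (hcomp (snd s1') (snd s2'))) eta0')) ⋅ (hcomp (snd s0') (((hcomp mu1' (snd s2')) ⋅ (hcomp (snd s1') l12')) ⋅ (hcomp (hcomp (snd s1') (snd s2')) eta1'))))).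
  { start constr:([snd s0; snd s1; snd s2; snd s0'; snd s1'; snd s2'; snd v]) constr:([mu0; eta0; mu1; eta1; mu2; eta2; l01; l02; l12; mu0'; eta0'; mu1'; eta1'; mu2'; eta2'; l01'; l02'; l12'; xi0; xi1; xi2]).
    sw 3.
    sw 4.
    sw 5.
    sw 6.
    sw 7.
    sw 8.
    sw 9.
    sw 10.
    rul RS2_12p 5 [3] [3;4].
    sw 0.
    sw 1.
    sw 8.
    sw 7.
    sw 6.
    sw 5.
    rul RTTp 2 (@nil nat) [4].
    sw 8.
    sw 7.
    sw 6.
    sw 5.
    sw 4.
    sw 3.
    sw 2.
    rul RS5_12p 0 [3] (@nil nat).
    rul RS1_12p 1 [3] [5].
    rulr RTTp 0 (@nil nat) (@nil nat).
    reflexivity. }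
  mkrule constr:([snd s0; snd s1; snd s2; snd s0'; snd s1'; snd s2'; snd v]) constr:([mu0; eta0; mu1; eta1; mu2; eta2; l01; l02; l12; mu0'; eta0'; mu1'; eta1'; mu2'; eta2'; l01'; l02'; l12'; xi0; xi1; xi2]) LB2p RLB2p.
  assert (F1 : ((((((hcomp mu0 (hcomp (snd s1) (snd s2))) ⋅ (hcomp (snd s0) (hcomp l01 (snd s2)))) ⋅ (hcomp (snd s0) (hcomp (snd s1) l02))) ⋅ (hcomp (hcomp (snd s0) (hcomp (snd s1) (snd s2))) eta0)) ⋅ (hcomp (snd s0) l12)) ⋅ (hcomp (((hcomp mu0 (snd s2)) ⋅ (hcomp (snd s0) l02)) ⋅ (hcomp (hcomp (snd s0) (snd s2)) eta0)) (snd s1))) = (((((hcomp mu0 (hcomp (snd s1) (snd s2))) ⋅ (hcomp (snd s0) (hcomp l01 (snd s2)))) ⋅ (hcomp (snd s0) (hcomp (snd s1) l02))) ⋅ (hcomp (hcomp (snd s0) (hcomp (snd s1) (snd s2))) eta0)) ⋅ (hcomp (snd s0) l12))).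
  { start constr:([snd s0; snd s1; snd s2; snd s0'; snd s1'; snd s2'; snd v]) constr:([mu0; eta0; mu1; eta1; mu2; eta2; l01; l02; l12; mu0'; eta0'; mu1'; eta1'; mu2'; eta2'; l01'; l02'; l12'; xi0; xi1; xi2]).
    sw 4.
    sw 3.
    sw 2.
    sw 1.
    rulr RAs0 0 (@nil nat) [1;2].
    rulr RFL1 1 [0] (@nil nat).
    sw 5.
    sw 4.
    rul RUb0 3 [0;2] [1].
    rulr RYB 1 [0] (@nil nat).
    sw 3.
    reflexivity. }
  mkrule constr:([snd s0; snd s1; snd s2; snd s0'; snd s1'; snd s2'; snd v]) constr:([mu0; eta0; mu1; eta1; mu2; eta2; l01; l02; l12; mu0'; eta0'; mu1'; eta1'; mu2'; eta2'; l01'; l02'; l12'; xi0; xi1; xi2]) F1 RF1.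
  assert (LB1 : (((hcomp ((hcomp mu0 mu1) ⋅ (hcomp (hcomp (snd s0) l01) (snd s1))) (snd s2)) ⋅ (hcomp (((hcomp mu0 (snd s1)) ⋅ (hcomp (snd s0) l01)) ⋅ (hcomp (hcomp (snd s0) (snd s1)) eta0)) (((hcomp (snd s0) l12) ⋅ (hcomp l02 (snd s1))) ⋅ (hcomp (snd s2) (((hcomp mu0 (snd s1)) ⋅ (hcomp (snd s0) l01)) ⋅ (hcomp (hcomp (snd s0) (snd s1)) eta0)))))) ⋅ (hcomp (hcomp (((hcomp mu0 (snd s1)) ⋅ (hcomp (snd s0) l01)) ⋅ (hcomp (hcomp (snd s0) (snd s1)) eta0)) (snd s2)) (l01 ⋅ (hcomp eta1 eta0)))) = (((((hcomp mu0 (hcomp (snd s1) (snd s2))) ⋅ (hcomp (snd s0) (hcomp l01 (snd s2)))) ⋅ (hcomp (snd s0) (hcomp (snd s1) l02))) ⋅ (hcomp (hcomp (snd s0) (hcomp (snd s1) (snd s2))) eta0)) ⋅ (hcomp (snd s0) (((hcomp mu1 (snd s2)) ⋅ (hcomp (snd s1) l12)) ⋅ (hcomp (hcomp (snd s1) (snd s2)) eta1))))).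
  { start constr:([snd s0; snd s1; snd s2; snd s0'; snd s1'; snd s2'; snd v]) constr:([mu0; eta0; mu1; eta1; mu2; eta2; l01; l02; l12; mu0'; eta0'; mu1'; eta1'; mu2'; eta2'; l01'; l02'; l12'; xi0; xi1; xi2]).
    rul RM1_01 0 (@nil nat) [2].
    sw 7.
    sw 8.
    sw 9.
    sw 6.
    sw 7.
    sw 8.
    sw 5.
    sw 6.
    sw 7.
    sw 4.
    sw 5.
    sw 6.
    sw 3.
    sw 4.
    sw 5.
    rul RM1_01 0 (@nil nat) [2].
    rul RS1_01 5 [0;1;2] (@nil nat).
    rulr RYB 3 [0;1] (@nil nat).
    rulr RW1_01 1 [0] [2].
    sw 2.
    sw 5.
    sw 4.
    sw 3.
    reflexivity. }
  mkrule constr:([snd s0; snd s1; snd s2; snd s0'; snd s1'; snd s2'; snd v]) constr:([mu0; eta0; mu1; eta1; mu2; eta2; l01; l02; l12; mu0'; eta0'; mu1'; eta1'; mu2'; eta2'; l01'; l02'; l12'; xi0; xi1; xi2]) LB1 RLB1.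
  assert (D2 : (((hcomp (snd v) (((((hcomp mu0 (hcomp (snd s1) (snd s2))) ⋅ (hcomp (snd s0) (hcomp l01 (snd s2)))) ⋅ (hcomp (snd s0) (hcomp (snd s1) l02))) ⋅ (hcomp (hcomp (snd s0) (hcomp (snd s1) (snd s2))) eta0)) ⋅ (hcomp (snd s0) (((hcomp mu1 (snd s2)) ⋅ (hcomp (snd s1) l12)) ⋅ (hcomp (hcomp (snd s1) (snd s2)) eta1))))) ⋅ (((hcomp xi0 (hcomp (snd s1) (snd s2))) ⋅ (hcomp (snd s0') (hcomp xi1 (snd s2)))) ⋅ (hcomp (hcomp (snd s0') (snd s1')) xi2))) ⋅ (hcomp (((hcomp l01' (snd s2')) ⋅ (hcomp (snd s1') l02')) ⋅ (hcomp (((hcomp mu1' (snd s2')) ⋅ (hcomp (snd s1') l12')) ⋅ (hcomp (hcomp (snd s1') (snd s2')) eta1')) (snd s0'))) (snd v))) = (((hcomp (snd v) (((hcomp l01 (snd s2)) ⋅ (hcomp (snd s1) l02)) ⋅ (hcomp (((hcomp mu1 (snd s2)) ⋅ (hcomp (snd s1) l12)) ⋅ (hcomp (hcomp (snd s1) (snd s2)) eta1)) (snd s0)))) ⋅ (hcomp (((hcomp (snd v) (((hcomp mu1 (snd s2)) ⋅ (hcomp (snd s1) l12)) ⋅ (hcomp (hcomp (snd s1) (snd s2)) eta1))) ⋅ (hcomp xi1 (snd s2))) ⋅ (hcomp (snd s1') xi2)) (snd s0))) ⋅ (hcomp (hcomp (snd s1') (snd s2')) xi0))).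
  { start constr:([snd s0; snd s1; snd s2; snd s0'; snd s1'; snd s2'; snd v]) constr:([mu0; eta0; mu1; eta1; mu2; eta2; l01; l02; l12; mu0'; eta0'; mu1'; eta1'; mu2'; eta2'; l01'; l02'; l12'; xi0; xi1; xi2]).
    rul RTT 0 [6] (@nil nat).
    sw 3.
    sw 4.
    sw 5.
    rulr RS2_01 3 [6;2] [2].
    sw 5.
    sw 6.
    sw 7.
    sw 8.
    sw 9.
    sw 10.
    sw 12.
    sw 7.
    sw 11.
    sw 6.
    sw 5.
    rulr RC01 6 (@nil nat) [0;2].
    sw 5.
    sw 8.
    sw 7.
    sw 6.
    sw 5.
    rul RS1_01 3 [6;2] [2].
    sw 3.
    rulr RF1p 0 [6] (@nil nat).
    sw 7.
    sw 6.
    sw 5.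
    rulr RC02 6 [4] (@nil nat).
    sw 5.
    rulr RFL2 0 [6] (@nil nat).
    sw 7.
    sw 8.
    sw 9.
    rul RK12 2 (@nil nat) [0].
    rulr RS2_12 2 [6] [0].
    reflexivity. }
  mkrule constr:([snd s0; snd s1; snd s2; snd s0'; snd s1'; snd s2'; snd v]) constr:([mu0; eta0; mu1; eta1; mu2; eta2; l01; l02; l12; mu0'; eta0'; mu1'; eta1'; mu2'; eta2'; l01'; l02'; l12'; xi0; xi1; xi2]) D2 RD2.
  assert (K3 : (((hcomp (snd v) (((((hcomp mu0 (hcomp (snd s1) (snd s2))) ⋅ (hcomp (snd s0) (hcomp l01 (snd s2)))) ⋅ (hcomp (snd s0) (hcomp (snd s1) l02))) ⋅ (hcomp (hcomp (snd s0) (hcomp (snd s1) (snd s2))) eta0)) ⋅ (hcomp (snd s0) (((hcomp mu1 (snd s2)) ⋅ (hcomp (snd s1) l12)) ⋅ (hcomp (hcomp (snd s1) (snd s2)) eta1))))) ⋅ (((hcomp xi0 (hcomp (snd s1) (snd s2))) ⋅ (hcomp (snd s0') (hcomp xi1 (snd s2)))) ⋅ (hcomp (hcomp (snd s0') (snd s1')) xi2))) ⋅ (hcomp (((((hcomp mu0' (hcomp (snd s1') (snd s2'))) ⋅ (hcomp (snd s0') (hcomp l01' (snd s2')))) ⋅ (hcomp (snd s0') (hcomp (snd s1') l02'))) ⋅ (hcomp (hcomp (snd s0') (hcomp (snd s1') (snd s2'))) eta0')) ⋅ (hcomp (snd s0') (((hcomp mu1' (snd s2')) ⋅ (hcomp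 (snd s1') l12')) ⋅ (hcomp (hcomp (snd s1') (snd s2')) eta1')))) (snd v))) = ((hcomp (snd v) (((((hcomp mu0 (hcomp (snd s1) (snd s2))) ⋅ (hcomp (snd s0) (hcomp l01 (snd s2)))) ⋅ (hcomp (snd s0) (hcomp (snd s1) l02))) ⋅ (hcomp (hcomp (snd s0) (hcomp (snd s1) (snd s2))) eta0)) ⋅ (hcomp (snd s0) (((hcomp mu1 (snd s2)) ⋅ (hcomp (snd s1) l12)) ⋅ (hcomp (hcomp (snd s1) (snd s2)) eta1))))) ⋅ (((hcomp xi0 (hcomp (snd s1) (snd s2))) ⋅ (hcomp (snd s0') (hcomp xi1 (snd s2)))) ⋅ (hcomp (hcomp (snd s0') (snd s1')) xi2)))).
  { start constr:([snd s0; snd s1; snd s2; snd s0'; snd s1'; snd s2'; snd v]) constr:([mu0; eta0; mu1; eta1; mu2; eta2; l01; l02; l12; mu0'; eta0'; mu1'; eta1'; mu2'; eta2'; l01'; l02'; l12'; xi0; xi1; xi2]).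
    sw 6.
    sw 9.
    sw 5.
    sw 8.
    sw 4.
    sw 7.
    sw 3.
    sw 6.
    sw 2.
    sw 5.
    sw 1.
    sw 4.
    sw 3.
    sw 2.
    rul RXm0 1 (@nil nat) [0;1;2].
    rulr RAs0 0 [6] [1;2].
    sw 1.
    sw 3.
    sw 4.
    sw 5.
    sw 6.
    sw 7.
    sw 8.
    sw 14.
    sw 15.
    sw 16.
    rul RD2 2 [3] (@nil nat).
    rul RXu0 12 [3;4;5] (@nil nat).
    sw 1.
    sw 2.
    sw 3.
    sw 4.
    sw 5.
    sw 6.
    sw 7.
    sw 8.
    rul RS2_12 3 [6;0] [0].
    sw 8.
    sw 7.
    sw 6.
    sw 5.
    sw 4.
    sw 3.
    reflexivity. }
  mkrule constr:([snd s0; snd s1; snd s2; snd s0'; snd s1'; snd s2'; snd v]) constr:([mu0; eta0; mu1; eta1; mu2; eta2; l01; l02; l12; mu0'; eta0'; mu1'; eta1'; mu2'; eta2'; l01'; l02'; l12'; xi0; xi1; xi2]) K3 RK3.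
  assert (G1 : (((hcomp (snd v) (((hcomp (snd s0) l12) ⋅ (hcomp l02 (snd s1))) ⋅ (hcomp (snd s2) (((hcomp mu0 (snd s1)) ⋅ (hcomp (snd s0) l01)) ⋅ (hcomp (hcomp (snd s0) (snd s1)) eta0))))) ⋅ (hcomp xi2 (((hcomp mu0 (snd s1)) ⋅ (hcomp (snd s0) l01)) ⋅ (hcomp (hcomp (snd s0) (snd s1)) eta0)))) ⋅ (hcomp (snd s2') (((hcomp (snd v) (((hcomp mu0 (snd s1)) ⋅ (hcomp (snd s0) l01)) ⋅ (hcomp (hcomp (snd s0) (snd s1)) eta0))) ⋅ (hcomp xi0 (snd s1))) ⋅ (hcomp (snd s0') xi1)))) = ((((hcomp (snd v) (((hcomp ((hcomp mu0 mu1) ⋅ (hcomp (hcomp (snd s0) l01) (snd s1))) (snd s2)) ⋅ (hcomp (((hcomp mu0 (snd s1)) ⋅ (hcomp (snd s0) l01)) ⋅ (hcomp (hcomp (snd s0) (snd s1)) eta0)) (((hcomp (snd s0) l12) ⋅ (hcomp l02 (snd s1))) ⋅ (hcomp (snd s2) (((hcomp mu0 (snd s1)) ⋅ (hcomp (snd s0) l01)) ⋅ (hcomp (hcomp (snd s0) (snd s1)) eta0)))))) ⋅ (hcomp (hcomp (((hcomp mu0 (snd s1)) ⋅ (hcomp (snd s0) l01)) ⋅ (hcomp (hcomp (snd s0) (snd s1)) eta0)) (snd s2)) (l01 ⋅ (hcomp eta1 eta0))))) ⋅ (hcomp (((hcomp (snd v) (((hcomp mu0 (snd s1)) ⋅ (hcomp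 (snd s0) l01)) ⋅ (hcomp (hcomp (snd s0) (snd s1)) eta0))) ⋅ (hcomp xi0 (snd s1))) ⋅ (hcomp (snd s0') xi1)) (snd s2))) ⋅ (hcomp (((hcomp mu0' (snd s1')) ⋅ (hcomp (snd s0') l01')) ⋅ (hcomp (hcomp (snd s0') (snd s1')) eta0')) xi2)) ⋅ (hcomp (((hcomp (snd s0') l12') ⋅ (hcomp l02' (snd s1'))) ⋅ (hcomp (snd s2') (((hcomp mu0' (snd s1')) ⋅ (hcomp (snd s0') l01')) ⋅ (hcomp (hcomp (snd s0') (snd s1')) eta0')))) (snd v)))).
  { start constr:([snd s0; snd s1; snd s2; snd s0'; snd s1'; snd s2'; snd v]) constr:([mu0; eta0; mu1; eta1; mu2; eta2; l01; l02; l12; mu0'; eta0'; mu1'; eta1'; mu2'; eta2'; l01'; l02'; l12'; xi0; xi1; xi2]).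
    sw 5.
    sw 6.
    sw 7.
    rul RS2_01 2 [6;2] (@nil nat).
    sw 5.
    sw 6.
    sw 7.
    rul RS2_01 2 [6;2] (@nil nat).
    rul RFL1 0 [6] (@nil nat).
    sw 3.
    sw 4.
    sw 5.
    sw 6.
    rul RC02 4 (@nil nat) [1;0].
    sw 9.
    sw 8.
    sw 7.
    sw 6.
    sw 5.
    sw 4.
    sw 3.
    rul RF1 0 [6] (@nil nat).
    sw 3.
    sw 4.
    sw 5.
    sw 7.
    sw 3.
    sw 6.
    rul RC12 4 [3] [0].
    sw 3.
    sw 4.
    sw 5.
    sw 9.
    sw 8.
    sw 7.
    sw 6.
    sw 5.
    sw 4.
    sw 3.
    rulr RK3 0 (@nil nat) (@nil nat).
    sw 3.
    sw 4.
    sw 6.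
    sw 5.
    sw 7.
    sw 6.
    sw 8.
    sw 7.
    sw 9.
    sw 8.
    sw 10.
    sw 9.
    sw 11.
    sw 10.
    sw 12.
    sw 11.
    sw 13.
    sw 12.
    sw 14.
    sw 13.
    sw 11.
    sw 15.
    sw 14.
    sw 12.
    sw 16.
    sw 15.
    sw 13.
    sw 17.
    sw 16.
    sw 14.
    rul RS1_12p 11 [3] [3;6;1;0].
    sw 11.
    rulr RFL1p 8 (@nil nat) [6;1;0].
    sw 12.
    sw 11.
    sw 10.
    sw 9.
    sw 8.
    sw 7.
    sw 6.
    sw 5.
    sw 13.
    sw 12.
    sw 11.
    sw 10.
    sw 9.
    sw 8.
    sw 7.
    sw 6.
    sw 4.
    sw 3.
    rul RTT 0 [6] (@nil nat).
    sw 3.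
    sw 4.
    sw 5.
    rulr RS2_01 3 [6;2] [2].
    sw 8.
    sw 7.
    sw 6.
    sw 5.
    sw 4.
    sw 3.
    rulr RTT 0 [6] (@nil nat).
    rulr RLB1 0 [6] (@nil nat).
    sw 10.
    sw 9.
    sw 8.
    sw 7.
    sw 6.
    sw 5.
    sw 11.
    sw 10.
    sw 9.
    sw 8.
    sw 7.
    sw 6.
    sw 16.
    sw 15.
    sw 14.
    sw 13.
    sw 12.
    sw 11.
    sw 10.
    sw 9.
    sw 8.
    sw 7.
    sw 17.
    sw 16.
    sw 15.
    sw 14.
    sw 13.
    sw 12.
    sw 11.
    sw 10.
    sw 9.
    sw 8.
    sw 18.
    sw 17.
    sw 16.
    sw 15.
    sw 14.
    sw 13.
    sw 12.
    sw 11.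
    sw 10.
    sw 9.
    sw 19.
    sw 18.
    sw 17.
    sw 16.
    sw 15.
    sw 14.
    sw 13.
    sw 12.
    sw 11.
    sw 10.
    sw 20.
    sw 19.
    sw 18.
    sw 17.
    sw 16.
    sw 15.
    sw 14.
    sw 13.
    sw 12.
    sw 11.
    rulr RK01 7 (@nil nat) [0;0;0;1;2].
    sw 14.
    sw 13.
    sw 12.
    sw 11.
    sw 10.
    sw 9.
    sw 8.
    sw 7.
    sw 15.
    sw 14.
    sw 13.
    sw 12.
    sw 11.
    sw 10.
    sw 9.
    sw 8.
    sw 16.
    sw 15.
    sw 14.
    sw 13.
    sw 12.
    sw 11.
    sw 10.
    sw 9.
    sw 17.
    sw 16.
    sw 15.
    sw 14.
    sw 13.
    sw 12.
    sw 11.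
    sw 10.
    sw 18.
    sw 17.
    sw 16.
    sw 15.
    sw 14.
    sw 13.
    sw 12.
    sw 11.
    sw 6.
    sw 5.
    sw 19.
    sw 18.
    sw 17.
    sw 16.
    sw 15.
    sw 14.
    sw 13.
    sw 12.
    sw 7.
    sw 6.
    sw 20.
    sw 19.
    sw 18.
    sw 17.
    sw 16.
    sw 15.
    sw 14.
    sw 13.
    sw 8.
    sw 7.
    sw 21.
    sw 20.
    sw 19.
    sw 18.
    sw 17.
    sw 16.
    sw 15.
    sw 14.
    sw 9.
    sw 8.
    sw 22.
    sw 21.
    sw 20.
    sw 19.
    sw 18.
    sw 17.
    sw 16.
    sw 15.
    sw 10.
    sw 9.
    sw 23.
    sw 22.
    sw 21.
    sw 20.
    sw 19.
    sw 18.
    sw 17.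
    sw 16.
    sw 11.
    sw 10.
    reflexivity. }
  mkrule constr:([snd s0; snd s1; snd s2; snd s0'; snd s1'; snd s2'; snd v]) constr:([mu0; eta0; mu1; eta1; mu2; eta2; l01; l02; l12; mu0'; eta0'; mu1'; eta1'; mu2'; eta2'; l01'; l02'; l12'; xi0; xi1; xi2]) G1 RG1.
  assert (G2 : (((hcomp (snd v) (((hcomp l01 (snd s2)) ⋅ (hcomp (snd s1) l02)) ⋅ (hcomp (((hcomp mu1 (snd s2)) ⋅ (hcomp (snd s1) l12)) ⋅ (hcomp (hcomp (snd s1) (snd s2)) eta1)) (snd s0)))) ⋅ (hcomp (((hcomp (snd v) (((hcomp mu1 (snd s2)) ⋅ (hcomp (snd s1) l12)) ⋅ (hcomp (hcomp (snd s1) (snd s2)) eta1))) ⋅ (hcomp xi1 (snd s2))) ⋅ (hcomp (snd s1') xi2)) (snd s0))) ⋅ (hcomp (((hcomp mu1' (snd s2')) ⋅ (hcomp (snd s1') l12')) ⋅ (hcomp (hcomp (snd s1') (snd s2')) eta1')) xi0)) = ((((hcomp (snd v) (((hcomp mu0 (((hcomp mu1 (snd s2)) ⋅ (hcomp (snd s1) l12)) ⋅ (hcomp (hcomp (snd s1) (snd s2)) eta1))) ⋅ (hcomp (snd s0) (((hcomp l01 (snd s2)) ⋅ (hcomp (snd s1) l02)) ⋅ (hcomp (((hcomp mu1 (snd s2)) ⋅ (hcomp (snd s1) l12)) ⋅ (hcomp (hcomp (snd s1) (snd s2)) eta1)) (snd s0))))) ⋅ (hcomp (hcomp (snd s0)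 (((hcomp mu1 (snd s2)) ⋅ (hcomp (snd s1) l12)) ⋅ (hcomp (hcomp (snd s1) (snd s2)) eta1))) eta0))) ⋅ (hcomp xi0 (((hcomp mu1 (snd s2)) ⋅ (hcomp (snd s1) l12)) ⋅ (hcomp (hcomp (snd s1) (snd s2)) eta1)))) ⋅ (hcomp (snd s0') (((hcomp (snd v) (((hcomp mu1 (snd s2)) ⋅ (hcomp (snd s1) l12)) ⋅ (hcomp (hcomp (snd s1) (snd s2)) eta1))) ⋅ (hcomp xi1 (snd s2))) ⋅ (hcomp (snd s1') xi2)))) ⋅ (hcomp (((hcomp l01' (snd s2')) ⋅ (hcomp (snd s1') l02')) ⋅ (hcomp (((hcomp mu1' (snd s2')) ⋅ (hcomp (snd s1') l12')) ⋅ (hcomp (hcomp (snd s1') (snd s2')) eta1')) (snd s0'))) (snd v)))).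
  { start constr:([snd s0; snd s1; snd s2; snd s0'; snd s1'; snd s2'; snd v]) constr:([mu0; eta0; mu1; eta1; mu2; eta2; l01; l02; l12; mu0'; eta0'; mu1'; eta1'; mu2'; eta2'; l01'; l02'; l12'; xi0; xi1; xi2]).
    sw 4.
    sw 5.
    sw 6.
    sw 7.
    sw 8.
    sw 9.
    sw 10.
    sw 11.
    rul RK12 4 (@nil nat) [1;0].
    sw 8.
    sw 7.
    sw 6.
    sw 5.
    sw 4.
    rulr RD2 0 (@nil nat) (@nil nat).
    sw 3.
    sw 4.
    sw 5.
    rulr RS2_12 3 [6;0] [0].
    sw 8.
    sw 7.
    sw 6.
    sw 9.
    sw 8.
    sw 7.
    rulr RS2_12 3 [6;0] [0].
    sw 8.
    sw 7.
    sw 6.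
    sw 9.
    sw 8.
    sw 7.
    sw 5.
    sw 4.
    sw 3.
    rulr RLB2 0 [6] (@nil nat).
    reflexivity. }
  mkrule constr:([snd s0; snd s1; snd s2; snd s0'; snd s1'; snd s2'; snd v]) constr:([mu0; eta0; mu1; eta1; mu2; eta2; l01; l02; l12; mu0'; eta0'; mu1'; eta1'; mu2'; eta2'; l01'; l02'; l12'; xi0; xi1; xi2]) G2 RG2.
  split.
  - unfold is_wdl1. split; [exact (proj1 Hh02) | split; [exact (LemA Hw01 Hw01p Hh01) | exact G1]].
  - unfold is_wdl1. split; [exact (LemA Hw12 Hw12p Hh12) | split; [exact (proj1 (proj2 Hh01)) | exact G2]].
Qed.
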